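(* For every $m\in[0.5,0.547]$, the system $\dot x=y^3-x^3$, $\dot y=-x+my^5$ has neither limit cycles nor polycycles.
   Context: A polycycle is a simple closed curve formed by finitely many solutions of the system and admitting a Poincaré return map. *)

(* Defs.v *)
From Stdlib Require Import Reals Lra.
Open Scope R_scope.

Definition fP (m : R) (x y : R) : R := y ^ 3 - x ^ 3.
Definition fQ (m : R) (x y : R) : R := - x + m * y ^ 5.

Definition pdist (p q : R * R) : R :=
  sqrt ((fst p - fst q) ^ 2 + (snd p - snd q) ^ 2).

Definition is_equilibrium (f1 f2 : R -> R -> R) (p : R * R) : Prop :=
  f1 (fst p) (snd p) = 0 /\ f2 (fst p) (snd p) = 0.

Definition is_solution (f1 f2 : R -> R -> R) (I : R -> Prop)
  (x y : R -> R) : Prop :=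
  forall t, I t ->
    derivable_pt_lim x t (f1 (x t) (y t)) /\
    derivable_pt_lim y t (f2 (x t) (y t)).

Definition periodic_orbit (f1 f2 : R -> R -> R) (G : R * R -> Prop) : Prop :=
  exists (x y : R -> R) (T : R),
    is_solution f1 f2 (fun _ => True) x y /\
    0 < T /\
    (forall t, x (t + T) = x t /\ y (t + T) = y t) /\
    ~ is_equilibrium f1 f2 (x 0, y 0) /\
    (forall p, G p <-> exists t, p = (x t, y t)).

Definition near (G : R * R -> Prop) (eps : R) (p : R * R) : Prop :=
  exists q, G q /\ pdist p q < eps.

(* A limit cycle is an isolated periodic orbit: some eps-neighbourhood of it
   contains no other periodic orbit. *)
Definition limit_cycle (f1 f2 : R -> R -> R) (G : R * R -> Prop) : Prop :=
  periodic_orbit f1 f2 G /\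
  exists eps, 0 < eps /\
    forall G', periodic_orbit f1 f2 G' ->
      (forall p, G' p -> near G eps p) ->
      forall p, G' p <-> G p.

(* Polycycle: a simple closed curve C made of n >= 1 distinct equilibria
   p_0, ..., p_{n-1} and n pairwise distinct regular orbits gamma_i, with
   gamma_i going from p_i (t -> -oo) to p_{(i+1) mod n} (t -> +oo),
   which admits a Poincare (first) return map on one side: on a transversal
   segment {q + u v | 0 < u < s0} through a point q of gamma_0, every
   trajectory starting at q + s v (0 < s < s0) returns to the segment at a
   first positive time tau s, at q + Pm s v, and as s -> 0+ the return point
   tends to q and the trajectory stays arbitrarily close to C. *)
Definition polycycle (f1 f2 : R -> R -> R) (C : R * R -> Prop) : Prop :=
  exists (n : nat) (pts : nat -> R * R) (gx gy : nat -> R -> R),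
    (0 < n)%nat /\
    (forall i, (i < n)%nat -> is_equilibrium f1 f2 (pts i)) /\
    (forall i j, (i < n)%nat -> (j < n)%nat -> pts i = pts j -> i = j) /\
    (forall i, (i < n)%nat ->
       is_solution f1 f2 (fun _ => True) (gx i) (gy i) /\
       ~ is_equilibrium f1 f2 (gx i 0, gy i 0) /\
       (forall eps, 0 < eps -> exists M, forall t, t < M ->
          pdist (gx i t, gy i t) (pts i) < eps) /\
       (forall eps, 0 < eps -> exists M, forall t, M < t ->
          pdist (gx i t, gy i t) (pts ((i + 1) mod n)%nat) < eps)) /\
    (forall i j t s, (i < n)%nat -> (j < n)%nat ->
       (gx i t, gy i t) = (gx j s, gy j s) -> i = j) /\
    (forall p, C p <->
       (exists i, (i < n)%nat /\ p = pts i) \/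
       (exists i t, (i < n)%nat /\ p = (gx i t, gy i t))) /\
    (let q := (gx 0%nat 0, gy 0%nat 0) in
     exists (vx vy s0 : R) (tau Pm : R -> R) (sx sy : R -> R -> R),
       vx * f2 (fst q) (snd q) - vy * f1 (fst q) (snd q) <> 0 /\
       0 < s0 /\
       (forall s, 0 < s < s0 ->
          0 < tau s /\ 0 < Pm s < s0 /\
          is_solution f1 f2 (fun t => 0 <= t <= tau s) (sx s) (sy s) /\
          sx s 0 = fst q + s * vx /\ sy s 0 = snd q + s * vy /\
          sx s (tau s) = fst q + Pm s * vx /\
          sy s (tau s) = snd q + Pm s * vy /\
          (forall t u, 0 < t < tau s -> 0 < u < s0 ->
             ~ (sx s t = fst q + u * vx /\ sy s t = snd q + u * vy))) /\
       (forall eta, 0 < eta -> exists delta, 0 < delta /\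
          forall s, 0 < s < delta -> s < s0 ->
            Pm s < eta /\
            forall t, 0 <= t <= tau s -> near C eta (sx s t, sy s t))).

(* Main.v *)
Require Import Defs.
From Stdlib Require Import Reals Lra Lia.
From Coquelicot Require Coquelicot.
Open Scope R_scope.

Lemma pow2_zero (z : R) : z ^ 2 = 0 -> z = 0.
Proof. intros H. apply Rsqr_0_uniq. unfold Rsqr. simpl in H. lra. Qed.

Lemma sq_zero (c z : R) : 0 < c -> c * z ^ 2 = 0 -> z = 0.
Proof.
  intros Hc H. destruct (Rmult_integral _ _ H) as [H1|H1]. lra.
  apply pow2_zero. exact H1.
Qed.
Definition Vf (m x y : R) : R :=
  ((68413665099780000000)) * (x ^ 0 * y ^ 4) + ((-128273770125530398680) + (274844588758119016300) * m) * (x ^ 0 * y ^ 8) + ((754946052513143585094) + (-1497119253191266841136) * m + (30318025152431016000) * m ^ 2) * (x ^ 0 * y ^ 10) + ((-652920290860976758620) + (1164234918622979427840) * m + (627443556778518480000) * m ^ 2) * (x ^ 0 * y ^ 12) + ((352771605142014750120) * m + (-973633337725070880000) * m ^ 2) * (x ^ 0 * y ^ 14) + ((-116729619565165326720) + (-60640708256528400000) * m) * (x ^ 1 * y ^ 5) + ((381133011499607283840) + (-785514381265373760000) * m) * (x ^ 1 * y ^ 7) + ((-2064610066115099899656) + (4026835895457636368640) * m + (119444852713174560000) * m ^ 2) * (x ^ 1 * y ^ 9) + ((2380134907152402656256) + (-4546875762482411816640) * m + (-1732868116928282880000) * m ^ 2) * (x ^ 1 * y ^ 11) + ((-1546077722248281277440)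 * m + (3840796456417831680000) * m ^ 2) * (x ^ 1 * y ^ 13) + ((136827330199560000000)) * (x ^ 2 * y ^ 0) + ((182645784596901451800) + (-268649025911940960000) * m) * (x ^ 2 * y ^ 4) + ((-503067220172159745375) + (1524704960150204774760) * m) * (x ^ 2 * y ^ 6) + ((3317874320773816234200) + (-6419827534306724196120) * m + (-179826046519719600000) * m ^ 2) * (x ^ 2 * y ^ 8) + ((-4552877522080990712610) + (9528723297001202649264) * m + (1546356692348139672000) * m ^ 2) * (x ^ 2 * y ^ 10) + ((2173566660613842574080) * m + (-4922957092766632920000) * m ^ 2) * (x ^ 2 * y ^ 12) + ((-273445861893235471440)) * (x ^ 3 * y ^ 1) + ((-144302265472757792400) + (479536124052585600000) * m) * (x ^ 3 * y ^ 3) + ((280352925116047993584) + (-1058583779376291818080) * m) * (x ^ 3 * y ^ 5) + ((-3461008155682343486220) + (5368520984279089291200) * m + (19369139241750480000) * m ^ 2) * (x ^ 3 * y ^ 7) + ((6500930088141346057200) + (-14422073462288481195360) * m + (-795033423045781920000) * m ^ 2) * (x ^ 3 * y ^ 9) + ((-1296228088168894520640) * m + (2742294939797649600000) * m ^ 2) * (x ^ 3 * y ^ 11) + ((87552051914042587560)) * (x ^ 4 * y ^ 0) + ((272323212968861243280) + (-67780342466960760000) * m) * (x ^ 4 * y ^ 2) + ((776470434669707112720) + (-707326133981266800000) * m) * (x ^ 4 * y ^ 4) + ((682265521058705388324) + (1237964926836710206440) * m + (-16149655883259360000) * m ^ 2) * (x ^ 4 * y ^ 6) + ((-7953231557132128979712)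 + (18349233897424196837070) * m + (1398124949737435920000) * m ^ 2) * (x ^ 4 * y ^ 8) + ((573808125439887778440) * m + (-2262827679325949736000) * m ^ 2) * (x ^ 4 * y ^ 10) + ((-193663693256919963600) + (96490364528748960000) * m) * (x ^ 5 * y ^ 1) + ((-1453270710072933387090) + (-423962957031829619040) * m) * (x ^ 5 * y ^ 3) + ((2190055488286776541200) + (-5655868659885011874768) * m) * (x ^ 5 * y ^ 5) + ((9503101541192228669700) + (-21555959666619705050880) * m + (-2302565247235693440000) * m ^ 2) * (x ^ 5 * y ^ 7) + ((-1453666127334122782080) * m + (5010553432010206080000) * m ^ 2) * (x ^ 5 * y ^ 9) + ((64781844380481107880) + (-179826046519719600000) * m) * (x ^ 6 * y ^ 0) + ((877426814300264942520) + (1874275996992482160000) * m) * (x ^ 6 * y ^ 2) + ((-1472659049529796458330) + (3289468756547413440000) * m) * (x ^ 6 * y ^ 4) + ((-10623508376631778227600) + (23814010058262330947040) * m + (1379924003601102960000) * m ^ 2) * (x ^ 6 * y ^ 6) + ((3348464466960277004340) * m + (-8195358823286494860000) * m ^ 2) * (x ^ 6 * y ^ 8) + ((-548877214770180135840) + (-325660690754118720000) * m) * (x ^ 7 * y ^ 1) + ((-993370589709638680800) + (1607420303799710400000) * m) * (x ^ 7 * y ^ 3) + ((8766058392807049990656) + (-21308669123336378784000) * m) * (x ^ 7 * y ^ 5) + ((-3533056696604273810400) * m + (7842925931497113600000) * m ^ 2) * (x ^ 7 * y ^ 7) + ((358311955952027897820) + (-496111153935376980000) * m) * (x ^ 8 *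 y ^ 0) + ((799527001717141457760) + (-1065844145177491680000) * m) * (x ^ 8 * y ^ 2) + ((-5347570516141485201570) + (14044385848797133830000) * m) * (x ^ 8 * y ^ 4) + ((1390775559847339105440) * m + (-3123904775786154360000) * m ^ 2) * (x ^ 8 * y ^ 6) + ((1223774622321113903040) + (-3003394832517839760000) * m) * (x ^ 9 * y ^ 1) + ((4355907652283425318080) + (-10760384605619769120000) * m) * (x ^ 9 * y ^ 3) + ((-991296042740722935216) + (2131765728801436728000) * m) * (x ^ 10 * y ^ 0) + ((-3192961742827323667200) + (8571661637923303920000) * m) * (x ^ 10 * y ^ 2) + ((397346497030247244480) + (-2703486792039153120000) * m) * (x ^ 11 * y ^ 1) + ((419590927067983610940) + (-201604396576482900000) * m) * (x ^ 12 * y ^ 0).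

Definition Vx (m x y : R) : R :=
  ((-116729619565165326720) + (-60640708256528400000) * m) * (x ^ 0 * y ^ 5) + ((381133011499607283840) + (-785514381265373760000) * m) * (x ^ 0 * y ^ 7) + ((-2064610066115099899656) + (4026835895457636368640) * m + (119444852713174560000) * m ^ 2) * (x ^ 0 * y ^ 9) + ((2380134907152402656256) + (-4546875762482411816640) * m + (-1732868116928282880000) * m ^ 2) * (x ^ 0 * y ^ 11) + ((-1546077722248281277440) * m + (3840796456417831680000) * m ^ 2) * (x ^ 0 * y ^ 13) + ((273654660399120000000)) * (x ^ 1 * y ^ 0) + ((365291569193802903600) + (-537298051823881920000) * m) * (x ^ 1 * y ^ 4) + ((-1006134440344319490750) + (3049409920300409549520) * m) * (x ^ 1 * y ^ 6) + ((6635748641547632468400) + (-12839655068613448392240) * m + (-359652093039439200000) * m ^ 2) * (x ^ 1 * y ^ 8) + ((-9105755044161981425220) + (19057446594002405298528) * m + (3092713384696279344000) * m ^ 2) * (x ^ 1 * y ^ 10) + ((4347133321227685148160) * m + (-9845914185533265840000) * m ^ 2) * (x ^ 1 * y ^ 12) + ((-820337585679706414320)) * (x ^ 2 * y ^ 1) + ((-432906796418273377200) + (1438608372157756800000) * m) * (x ^ 2 * y ^ 3) + ((841058775348143980752) + (-3175751338128875454240) * m) * (x ^ 2 * y ^ 5) + ((-10383024467047030458660) + (16105562952837267873600) * m + (58107417725251440000) * m ^ 2) * (x ^ 2 * y ^ 7) + ((19502790264424038171600) + (-43266220386865443586080) * m + (-2385100269137345760000) * m ^ 2) * (x ^ 2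 * y ^ 9) + ((-3888684264506683561920) * m + (8226884819392948800000) * m ^ 2) * (x ^ 2 * y ^ 11) + ((350208207656170350240)) * (x ^ 3 * y ^ 0) + ((1089292851875444973120) + (-271121369867843040000) * m) * (x ^ 3 * y ^ 2) + ((3105881738678828450880) + (-2829304535925067200000) * m) * (x ^ 3 * y ^ 4) + ((2729062084234821553296) + (4951859707346840825760) * m + (-64598623533037440000) * m ^ 2) * (x ^ 3 * y ^ 6) + ((-31812926228528515918848) + (73396935589696787348280) * m + (5592499798949743680000) * m ^ 2) * (x ^ 3 * y ^ 8) + ((2295232501759551113760) * m + (-9051310717303798944000) * m ^ 2) * (x ^ 3 * y ^ 10) + ((-968318466284599818000) + (482451822643744800000) * m) * (x ^ 4 * y ^ 1) + ((-7266353550364666935450) + (-2119814785159148095200) * m) * (x ^ 4 * y ^ 3) + ((10950277441433882706000) + (-28279343299425059373840) * m) * (x ^ 4 * y ^ 5) + ((47515507705961143348500) + (-107779798333098525254400) * m + (-11512826236178467200000) * m ^ 2) * (x ^ 4 * y ^ 7) + ((-7268330636670613910400) * m + (25052767160051030400000) * m ^ 2) * (x ^ 4 * y ^ 9) + ((388691066282886647280) + (-1078956279118317600000) * m) * (x ^ 5 * y ^ 0) + ((5264560885801589655120) + (11245655981954892960000) * m) * (x ^ 5 * y ^ 2) + ((-8835954297178778749980) + (19736812539284480640000) * m) * (x ^ 5 * y ^ 4) + ((-63741050259790669365600) + (142884060349573985682240) * m + (8279544021606617760000) * m ^ 2) * (x ^ 5 * y ^ 6) + ((20090786801761662026040) *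 m + (-49172152939718969160000) * m ^ 2) * (x ^ 5 * y ^ 8) + ((-3842140503391260950880) + (-2279624835278831040000) * m) * (x ^ 6 * y ^ 1) + ((-6953594127967470765600) + (11251942126597972800000) * m) * (x ^ 6 * y ^ 3) + ((61362408749649349934592) + (-149160683863354651488000) * m) * (x ^ 6 * y ^ 5) + ((-24731396876229916672800) * m + (54900481520479795200000) * m ^ 2) * (x ^ 6 * y ^ 7) + ((2866495647616223182560) + (-3968889231483015840000) * m) * (x ^ 7 * y ^ 0) + ((6396216013737131662080) + (-8526753161419933440000) * m) * (x ^ 7 * y ^ 2) + ((-42780564129131881612560) + (112355086790377070640000) * m) * (x ^ 7 * y ^ 4) + ((11126204478778712843520) * m + (-24991238206289234880000) * m ^ 2) * (x ^ 7 * y ^ 6) + ((11013971600890025127360) + (-27030553492660557840000) * m) * (x ^ 8 * y ^ 1) + ((39203168870550827862720) + (-96843461450577922080000) * m) * (x ^ 8 * y ^ 3) + ((-9912960427407229352160) + (21317657288014367280000) * m) * (x ^ 9 * y ^ 0) + ((-31929617428273236672000) + (85716616379233039200000) * m) * (x ^ 9 * y ^ 2) + ((4370811467332719689280) + (-29738354712430684320000) * m) * (x ^ 10 * y ^ 1) + ((5035091124815803331280) + (-2419252758917794800000) * m) * (x ^ 11 * y ^ 0).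

Definition Vy (m x y : R) : R :=
  ((273654660399120000000)) * (x ^ 0 * y ^ 3) + ((-1026190161004243189440) + (2198756710064952130400) * m) * (x ^ 0 * y ^ 7) + ((7549460525131435850940) + (-14971192531912668411360) * m + (303180251524310160000) * m ^ 2) * (x ^ 0 * y ^ 9) + ((-7835043490331721103440) + (13970819023475753134080) * m + (7529322681342221760000) * m ^ 2) * (x ^ 0 * y ^ 11) + ((4938802471988206501680) * m + (-13630866728150992320000) * m ^ 2) * (x ^ 0 * y ^ 13) + ((-583648097825826633600) + (-303203541282642000000) * m) * (x ^ 1 * y ^ 4) + ((2667931080497250986880) + (-5498600668857616320000) * m) * (x ^ 1 * y ^ 6) + ((-18581490595035899096904) + (36241523059118727317760) * m + (1075003674418571040000) * m ^ 2) * (x ^ 1 * y ^ 8) + ((26181483978676429218816) + (-50015633387306529983040) * m + (-19061549286211111680000) * m ^ 2) * (x ^ 1 * y ^ 10) + ((-20099010389227656606720) * m + (49930353933431811840000) * m ^ 2) * (x ^ 1 * y ^ 12) + ((730583138387605807200) + (-1074596103647763840000) * m) * (x ^ 2 * y ^ 3) + ((-3018403321032958472250) + (9148229760901228648560) * m) * (x ^ 2 * y ^ 5) + ((26542994566190529873600) + (-51358620274453793568960) * m + (-1438608372157756800000) * m ^ 2) * (x ^ 2 * y ^ 7) + ((-45528775220809907126100) + (95287232970012026492640) * m + (15463566923481396720000) * m ^ 2) * (x ^ 2 * y ^ 9) + ((26082799927366110888960) * m + (-59075485113199595040000) * m ^ 2) * (x ^ 2 * y ^ 11) + ((-273445861893235471440))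 * (x ^ 3 * y ^ 0) + ((-432906796418273377200) + (1438608372157756800000) * m) * (x ^ 3 * y ^ 2) + ((1401764625580239967920) + (-5292918896881459090400) * m) * (x ^ 3 * y ^ 4) + ((-24227057089776404403540) + (37579646889953625038400) * m + (135583974692253360000) * m ^ 2) * (x ^ 3 * y ^ 6) + ((58508370793272114514800) + (-129798661160596330758240) * m + (-7155300807412037280000) * m ^ 2) * (x ^ 3 * y ^ 8) + ((-14258508969857839727040) * m + (30165244337774145600000) * m ^ 2) * (x ^ 3 * y ^ 10) + ((544646425937722486560) + (-135560684933921520000) * m) * (x ^ 4 * y ^ 1) + ((3105881738678828450880) + (-2829304535925067200000) * m) * (x ^ 4 * y ^ 3) + ((4093593126352232329944) + (7427789561020261238640) * m + (-96897935299556160000) * m ^ 2) * (x ^ 4 * y ^ 5) + ((-63625852457057031837696) + (146793871179393574696560) * m + (11184999597899487360000) * m ^ 2) * (x ^ 4 * y ^ 7) + ((5738081254398877784400) * m + (-22628276793259497360000) * m ^ 2) * (x ^ 4 * y ^ 9) + ((-193663693256919963600) + (96490364528748960000) * m) * (x ^ 5 * y ^ 0) + ((-4359812130218800161270) + (-1271888871095488857120) * m) * (x ^ 5 * y ^ 2) + ((10950277441433882706000) + (-28279343299425059373840) * m) * (x ^ 5 * y ^ 4) + ((66521710788345600687900) + (-150891717666337935356160) * m + (-16117956730649854080000) * m ^ 2) * (x ^ 5 * y ^ 6) + ((-13082995146007105038720) * m + (45094980888091854720000) * m ^ 2) * (x ^ 5 * y ^ 8) + ((1754853628600529885040) + (3748551993984964320000)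 * m) * (x ^ 6 * y ^ 1) + ((-5890636198119185833320) + (13157875026189653760000) * m) * (x ^ 6 * y ^ 3) + ((-63741050259790669365600) + (142884060349573985682240) * m + (8279544021606617760000) * m ^ 2) * (x ^ 6 * y ^ 5) + ((26787715735682216034720) * m + (-65562870586291958880000) * m ^ 2) * (x ^ 6 * y ^ 7) + ((-548877214770180135840) + (-325660690754118720000) * m) * (x ^ 7 * y ^ 0) + ((-2980111769128916042400) + (4822260911399131200000) * m) * (x ^ 7 * y ^ 2) + ((43830291964035249953280) + (-106543345616681893920000) * m) * (x ^ 7 * y ^ 4) + ((-24731396876229916672800) * m + (54900481520479795200000) * m ^ 2) * (x ^ 7 * y ^ 6) + ((1599054003434282915520) + (-2131688290354983360000) * m) * (x ^ 8 * y ^ 1) + ((-21390282064565940806280) + (56177543395188535320000) * m) * (x ^ 8 * y ^ 3) + ((8344653359084034632640) * m + (-18743428654716926160000) * m ^ 2) * (x ^ 8 * y ^ 5) + ((1223774622321113903040) + (-3003394832517839760000) * m) * (x ^ 9 * y ^ 0) + ((13067722956850275954240) + (-32281153816859307360000) * m) * (x ^ 9 * y ^ 2) + ((-6385923485654647334400) + (17143323275846607840000) * m) * (x ^ 10 * y ^ 1) + ((397346497030247244480) + (-2703486792039153120000) * m) * (x ^ 11 * y ^ 0).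

Definition Qf (m x y w1 w2 : R) : R :=
  (((-116729619565165326720) + (213013952142591600000) * m) * (x ^ 0 * y ^ 2) + ((381133011499607283840) + (-785514381265373760000) * m) * (x ^ 0 * y ^ 4) + ((-2064610066115099899656) + (4163648239610568468240) * m) * (x ^ 0 * y ^ 6) + ((2380134907152402656256) + (-5367400908532751088000) * m) * (x ^ 0 * y ^ 8) + ((228479225040870804000) + (-417853199110707360000) * m) * (x ^ 1 * y ^ 1) + ((-185609294293980219390) + (496204217692420255200) * m) * (x ^ 1 * y ^ 3) + ((5089670919299351190960) + (-8840613333186225858960) * m) * (x ^ 1 * y ^ 5) + ((-9105755044161981425220) + (20568548031049238220000) * m) * (x ^ 1 * y ^ 7) + ((-591152075427664230480) + (1078956279118317600000) * m) * (x ^ 2 * y ^ 0) + ((-670042661698688940720) + (267170254223574240000) * m) * (x ^ 2 * y ^ 2) + ((-6035891145819345310500) + (7232211999614281680000) * m) * (x ^ 2 * y ^ 4) + ((19502790264424038171600) + (-43942997155464847440000) * m) * (x ^ 2 * y ^ 6) + ((4163791518777839588640) + (-5999919186327786720000) * m) * (x ^ 3 * y ^ 1) + ((-3224232246386961908280) + (16602553525106629080000) * m) * (x ^ 3 * y ^ 3) + ((-29432791321376113262592) + (64280359194702146496000) * m) * (x ^ 3 * y ^ 5) + ((-3702787358196757390560) + (3968889231483015840000) * m) * (x ^ 4 * y ^ 0) + ((18335180862492785010720) + (-46373728359059861760000) * m) * (x ^ 4 * y ^ 2) + ((38409752661799161923280) + (-82616732077946386320000) * m) * (x ^ 4 * y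 ^ 4) + ((-22140176079668737970880) + (52021791698949792720000) * m) * (x ^ 5 * y ^ 1) + ((-44238259995366631194000) + (99262714209495716880000) * m) * (x ^ 5 * y ^ 3) + ((9912960427407229352160) + (-21317657288014367280000) * m) * (x ^ 6 * y ^ 0) + ((31929617428273236672000) + (-85716616379233039200000) * m) * (x ^ 6 * y ^ 2) + ((-4370811467332719689280) + (29738354712430684320000) * m) * (x ^ 7 * y ^ 1) + ((-5035091124815803331280) + (2419252758917794800000) * m) * (x ^ 8 * y ^ 0)) * w1 ^ 2 + (((0)) * (x ^ 0 * y ^ 0) + ((-1163002505157175289040) + (2318201562778126690400) * m) * (x ^ 0 * y ^ 4) + ((8369985671181775122300) + (-16467380069319633439440) * m) * (x ^ 0 * y ^ 6) + ((-9381121212580002380880) + (21355441888097172240000) * m) * (x ^ 0 * y ^ 8) + ((8908332561928800) + (-23289758331840000) * m) * (x ^ 1 * y ^ 1) + ((-1034140606715727292320) + (1671069919445166240000) * m) * (x ^ 1 * y ^ 3) + ((-15153789560094525516696) + (26083933107119871048000) * m) * (x ^ 1 * y ^ 5) + ((30528617299904114366976) + (-69472532586145616928000) * m) * (x ^ 1 * y ^ 7) + ((-188460724421249280) + (407570770807200000) * m) * (x ^ 2 * y ^ 0) + ((5620018459962582986310) + (-9855003309078747062880) * m) * (x ^ 2 * y ^ 2) + ((7120760945562277120800) + (-4246273406577600866160) * m) * (x ^ 2 * y ^ 4) + ((-49417459485316590688020) + (111953470403404129500000) * m) * (x ^ 2 * y ^ 6) + ((-7323938908179428414880) + (12304806113131852320000)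 * m) * (x ^ 3 * y ^ 1) + ((13154378849183032100640) + (-30913532628096998880000) * m) * (x ^ 3 * y ^ 3) + ((52968559804699944525120) + (-123798189312549591840000) * m) * (x ^ 3 * y ^ 5) + ((4895310286446072292800) + (-7953883330852499040000) * m) * (x ^ 4 * y ^ 0) + ((-28402122190656200706720) + (49227783438714360480000) * m) * (x ^ 4 * y ^ 2) + ((-44712699115051216529280) + (114452789500886316480000) * m) * (x ^ 4 * y ^ 4) + ((22810691857409055119520) + (-44489249208518194080000) * m) * (x ^ 5 * y ^ 1) + ((41083722369297355587840) + (-102646209542868351360000) * m) * (x ^ 5 * y ^ 3) + ((-8732136270824614327680) + (21746823487234765920000) * m) * (x ^ 6 * y ^ 0) + ((-37799119833080192627040) + (87181635337339102560000) * m) * (x ^ 6 * y ^ 2) + ((17512127964433360177920) + (-42134561482135842720000) * m) * (x ^ 7 * y ^ 1) + ((-397346497030247244480) + (2703486792039153120000) * m) * (x ^ 8 * y ^ 0)) * (w1 * w2) + (((-236680579521317851920) + (303180251524310160000) * m) * (x ^ 0 * y ^ 4) + ((-3543826408203587425920) + (7529322681342221760000) * m) * (x ^ 0 * y ^ 6) + ((4938802471988206501680) + (-13630866728150992320000) * m) * (x ^ 0 * y ^ 8) + ((-380563391455856706240) + (1075003674418571040000) * m) * (x ^ 1 * y ^ 3) + ((9610985013305821104960) + (-19061549286211111680000) * m) * (x ^ 1 * y ^ 5) + ((-20099010389227656606720) + (49930353933431811840000) * m) * (x ^ 1 * y ^ 7) + ((-208798505884528560)) * (x ^ 2 * y ^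 0) + ((432906796418273377200) + (-1438608372157756800000) * m) * (x ^ 2 * y ^ 2) + ((-8439352613999154207360) + (15463566923481396720000) * m) * (x ^ 2 * y ^ 4) + ((26082799927366110888960) + (-59075485113199595040000) * m) * (x ^ 2 * y ^ 6) + ((275682251409421998960) + (135583974692253360000) * m) * (x ^ 3 * y ^ 1) + ((2462862866328802697760) + (-7155300807412037280000) * m) * (x ^ 3 * y ^ 3) + ((-14258508969857839727040) + (30165244337774145600000) * m) * (x ^ 3 * y ^ 5) + ((-156356053674829137360) + (-96897935299556160000) * m) * (x ^ 4 * y ^ 0) + ((-2232769562054062471440) + (11184999597899487360000) * m) * (x ^ 4 * y ^ 2) + ((5738081254398877784400) + (-22628276793259497360000) * m) * (x ^ 4 * y ^ 4) + ((6308924520822627543840) + (-16117956730649854080000) * m) * (x ^ 5 * y ^ 1) + ((-13082995146007105038720) + (45094980888091854720000) * m) * (x ^ 5 * y ^ 3) + ((-4143972062531114573760) + (8279544021606617760000) * m) * (x ^ 6 * y ^ 0) + ((26787715735682216034720) + (-65562870586291958880000) * m) * (x ^ 6 * y ^ 2) + ((-24731396876229916672800) + (54900481520479795200000) * m) * (x ^ 7 * y ^ 1) + ((8344653359084034632640) + (-18743428654716926160000) * m) * (x ^ 8 * y ^ 0)) * w2 ^ 2.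

Lemma Vd_Qf : forall m x y, Vx m x y * (y ^ 3 - x ^ 3) + Vy m x y * (- x + m * y ^ 5) = Qf m x y (y ^ 3 - x ^ 3) (- x + m * y ^ 5).
Proof. intros; unfold Vx, Vy, Qf; ring. Qed.

Definition QA (x y w1 w2 : R) : R :=
  (((-20445286987739053440)) * (x ^ 0 * y ^ 2) + ((-23248358266159192320)) * (x ^ 0 * y ^ 4) + ((34428107380368668928)) * (x ^ 0 * y ^ 6) + ((-607131094227945775488)) * (x ^ 0 * y ^ 8) + ((39105250971034248000)) * (x ^ 1 * y ^ 1) + ((124985629104459816420)) * (x ^ 1 * y ^ 3) + ((1338728505412476522960)) * (x ^ 1 * y ^ 5) + ((2357037942725275369560)) * (x ^ 1 * y ^ 7) + ((-103347871737010860960)) * (x ^ 2 * y ^ 0) + ((-1072915069173803641440)) * (x ^ 2 * y ^ 2) + ((-4839570292024408941000)) * (x ^ 2 * y ^ 4) + ((-4937416626616771096800)) * (x ^ 2 * y ^ 6) + ((2327663851227892457280)) * (x ^ 3 * y ^ 1) + ((10154089032332705263440)) * (x ^ 3 * y ^ 3) + ((5414776551949919970816)) * (x ^ 3 * y ^ 5) + ((-3436685484910498941120)) * (x ^ 4 * y ^ 0) + ((-9703366634074291738560)) * (x ^ 4 * y ^ 2) + ((-5797226754348062473440)) * (x ^ 4 * y ^ 4) + ((7741439539612316778240)) * (x ^ 5 * y ^ 1) + ((10786194218762454492000)) * (x ^ 5 * y ^ 3) + ((-1491736433199908575680)) * (x ^ 6 * y ^ 0) + ((-21857381522686565856000)) *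 (x ^ 6 * y ^ 2) + ((20996731777765244941440)) * (x ^ 7 * y ^ 1) + ((-7650929490713811862560)) * (x ^ 8 * y ^ 0)) * w1 ^ 2 + (((-7803447536223887680)) * (x ^ 0 * y ^ 4) + ((272591273043916805160)) * (x ^ 0 * y ^ 6) + ((2593199462937167478240)) * (x ^ 0 * y ^ 8) + ((-5473093207982400)) * (x ^ 1 * y ^ 1) + ((-397211293986288344640)) * (x ^ 1 * y ^ 3) + ((-4223646013069179985392)) * (x ^ 1 * y ^ 5) + ((-8415297986337388194048)) * (x ^ 1 * y ^ 7) + ((30649321964701440)) * (x ^ 2 * y ^ 0) + ((1385033610846418909740)) * (x ^ 2 * y ^ 2) + ((9995248484546953375440)) * (x ^ 2 * y ^ 4) + ((13118551432770948123960)) * (x ^ 2 * y ^ 6) + ((-2343071703227004509760)) * (x ^ 3 * y ^ 1) + ((-4604774929730934678720)) * (x ^ 3 * y ^ 3) + ((-17861069703149702789760)) * (x ^ 3 * y ^ 5) + ((1836737242039645545600)) * (x ^ 4 * y ^ 0) + ((-7576460942598040933440)) * (x ^ 4 * y ^ 2) + ((25027391270783883421440)) * (x ^ 4 * y ^ 4) + ((1132134506299916159040)) * (x ^ 5 * y ^ 1) + ((-20478764804273640184320)) * (x ^ 5 * y ^ 3) + ((4282550945585537264640)) * (x ^ 6 * y ^ 0) + ((11583395671178717305920)) * (x ^ 6 * y ^ 2) + ((-7110305553269122364160)) * (x ^ 7 * y ^ 1) + ((1908793797978658631040)) * (x ^ 8 * y ^ 0)) * (w1 * w2) + (((-170180907518325543840))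 * (x ^ 0 * y ^ 4) + ((441669864935046908160)) * (x ^ 0 * y ^ 6) + ((-3753261784174579316640)) * (x ^ 0 * y ^ 8) + ((313876891506857627520)) * (x ^ 1 * y ^ 3) + ((160420740400530529920)) * (x ^ 1 * y ^ 5) + ((9732333154976498626560)) * (x ^ 1 * y ^ 7) + ((-417597011769057120)) * (x ^ 2 * y ^ 0) + ((-572794779321210045600)) * (x ^ 2 * y ^ 2) + ((-1415138304516911694720)) * (x ^ 2 * y ^ 4) + ((-6909885258467373262080)) * (x ^ 2 * y ^ 6) + ((686948477511097357920)) * (x ^ 3 * y ^ 1) + ((-2229575074754431884480)) * (x ^ 3 * y ^ 3) + ((1648226398058466145920)) * (x ^ 3 * y ^ 5) + ((-409610042649214434720)) * (x ^ 4 * y ^ 0) + ((6719460473791362417120)) * (x ^ 4 * y ^ 2) + ((-11152114284461741791200)) * (x ^ 4 * y ^ 4) + ((-3500107689004598992320)) * (x ^ 5 * y ^ 1) + ((18928990596077644642560)) * (x ^ 5 * y ^ 3) + ((-8400103455611387520)) * (x ^ 6 * y ^ 0) + ((-11987439114927526810560)) * (x ^ 6 * y ^ 2) + ((5437687768019961854400)) * (x ^ 7 * y ^ 1) + ((-2054121936548856894720)) * (x ^ 8 * y ^ 0)) * w2 ^ 2.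

Definition QB (x y w1 w2 : R) : R :=
  (((-210987743167721520000)) * (x ^ 0 * y ^ 2) + ((-48543355052552162880000)) * (x ^ 0 * y ^ 4) + ((212905520951881052471280)) * (x ^ 0 * y ^ 6) + ((-555833389815012188880000)) * (x ^ 0 * y ^ 8) + ((-86474872686121920000)) * (x ^ 1 * y ^ 1) + ((85814412783773660204400)) * (x ^ 1 * y ^ 3) + ((253855426046485646108880)) * (x ^ 1 * y ^ 5) + ((2145240728821951881120000)) * (x ^ 1 * y ^ 7) + ((-962990749944503280000)) * (x ^ 2 * y ^ 0) + ((-523900532638393831440000)) * (x ^ 2 * y ^ 2) + ((-2079871182030333231540000)) * (x ^ 2 * y ^ 4) + ((-4534029179615233378080000)) * (x ^ 2 * y ^ 6) + ((881835723856540252800000)) * (x ^ 3 * y ^ 1) + ((5857364531846364198480000)) * (x ^ 3 * y ^ 3) + ((5728565158125960870720000)) * (x ^ 3 * y ^ 5) + ((-1531804948575547726080000)) * (x ^ 4 * y ^ 0) + ((-7031248549912959372000000)) * (x ^ 4 * y ^ 2) + ((-6781599784837511393760000)) * (x ^ 4 * y ^ 4) + ((6315743979656798646960000)) * (x ^ 5 * y ^ 1) + ((10058444677227525939360000)) * (x ^ 5 * y ^ 3) + ((-1747798109136629550000000)) * (x ^ 6 * y ^ 0) + ((-14957371731167235770400000)) * (x ^ 6 * y ^ 2) + ((11896068560366864633760000)) * (x ^ 7 * y ^ 1) + ((-3711759865687769575680000)) * (x ^ 8 * y ^ 0)) * w1 ^ 2 + (((105053749682460010608800)) * (x ^ 0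 * y ^ 4) + ((-637671226736064369073680)) * (x ^ 0 * y ^ 6) + ((2300305500209150834400000)) * (x ^ 0 * y ^ 8) + ((-3831165245587680000)) * (x ^ 1 * y ^ 1) + ((-120065360779221359040000)) * (x ^ 1 * y ^ 3) + ((-885878150499956053440000)) * (x ^ 1 * y ^ 5) + ((-7472858024717538092640000)) * (x ^ 1 * y ^ 7) + ((34480487210289120000)) * (x ^ 2 * y ^ 0) + ((229331649896508342914640)) * (x ^ 2 * y ^ 2) + ((4798049392164329447010480)) * (x ^ 2 * y ^ 4) + ((11821088825345468148480000)) * (x ^ 2 * y ^ 6) + ((-593209964296305195840000)) * (x ^ 3 * y ^ 1) + ((-3755323498386026286720000)) * (x ^ 3 * y ^ 3) + ((-14749049749264682211360000)) * (x ^ 3 * y ^ 5) + ((544536104469755317920000)) * (x ^ 4 * y ^ 0) + ((-1474524649679445524160000)) * (x ^ 4 * y ^ 2) + ((17892976741933598585280000)) * (x ^ 4 * y ^ 4) + ((-1524927459650397042240000)) * (x ^ 5 * y ^ 1) + ((-15063754250651632606080000)) * (x ^ 5 * y ^ 3) + ((3163376176692802630560000)) * (x ^ 6 * y ^ 0) + ((9889234696444296473280000)) * (x ^ 6 * y ^ 2) + ((-5535477166294945789920000)) * (x ^ 7 * y ^ 1) + ((1081460778215169512160000)) * (x ^ 8 * y ^ 0)) * (w1 * w2) + (((-70840981937520194400000)) * (x ^ 0 * y ^ 4) + ((574713098490607876800000)) * (x ^ 0 * y ^ 6) + ((-2517281628310386297360000)) * (x ^ 0 * y ^ 8) + ((207463618451101652640000))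 * (x ^ 1 * y ^ 3) + ((-815682446251656984000000)) * (x ^ 1 * y ^ 5) + ((7212893212359544469760000)) * (x ^ 1 * y ^ 7) + ((-208798505884528560000)) * (x ^ 2 * y ^ 0) + ((-354011983152019592400000)) * (x ^ 2 * y ^ 2) + ((19218493145169798480000)) * (x ^ 2 * y ^ 4) + ((-6231490429554067597920000)) * (x ^ 2 * y ^ 6) + ((349846685566084586880000)) * (x ^ 3 * y ^ 1) + ((-1451086675325581694400000)) * (x ^ 3 * y ^ 3) + ((2241879682904617916160000)) * (x ^ 3 * y ^ 5) + ((-209359224283686356880000)) * (x ^ 4 * y ^ 0) + ((3885425217996957114480000)) * (x ^ 4 * y ^ 2) + ((-6639586151514067271520000)) * (x ^ 4 * y ^ 4) + ((-2507597810842842637920000)) * (x ^ 5 * y ^ 1) + ((11583959399779139493120000)) * (x ^ 5 * y ^ 3) + ((384938517287705340960000)) * (x ^ 6 * y ^ 0) + ((-9075174475019485472640000)) * (x ^ 6 * y ^ 2) + ((5299166515472531301600000)) * (x ^ 7 * y ^ 1) + ((-1908002115046123976880000)) * (x ^ 8 * y ^ 0)) * w2 ^ 2.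

Lemma Qf_interp : forall m x y w1 w2, 47000 * Qf m x y w1 w2 = 500 * (547 - 1000 * m) * QA x y w1 w2 + (1000 * m - 500) * QB x y w1 w2.
Proof. intros; unfold Qf, QA, QB; ring. Qed.

Definition B00q (z0 z1 z2 z3 z4 z5 z6 z7 z8 z9 z10 z11 z12 z13 z14 z15 : R) : R :=
  (1121946544672208640) * (z0 * z0) + (-4030605850314418830) * (z0 * z1) + (-1856298769624206720) * (z0 * z2) + (-2049331604420782032) * (z0 * z3) + (4887168880931595720) * (z0 * z4) + (2157827466114700380) * (z0 * z5) + (-7674794866858686840) * (z0 * z6) + (5524550066261706480) * (z0 * z7) + (-696888737936795360) * (z0 * z8) + (2859370036025690880) * (z0 * z9) + (-1325869065151353450) * (z0 * z10) + (-873488577346601580) * (z0 * z11) + (-374676322866943032) * (z0 * z12) + (4282719015812668200) * (z0 * z13) + (-8218583079173026560) * (z0 * z14) + (4571150737065232320) * (z0 * z15) + (19868160953836475280) * (z1 * z1) + (-30277198206075300480) * (z1 * z2) + (-10178078541301550880) * (z1 * z3) + (-179226335242674720) * (z1 * z4) + (-9759829416299202240) * (z1 * z5) + (41597313336936957600) * (z1 * z6) + (-26105372224837345440) * (z1 * z7) + (1908211414281812640) * (z1 * z8) + (-16741551654864036000) * (z1 * z9) + (12656865744955111680) * (z1 * z10) + (34954515306496225440) * (z1 * z11) + (-35045263849836240000) * (z1 * z12) + (-34352812755113973120) * (z1 * z13) + (36840170589833651040) * (z1 * z14) + (-1624216101183355680) * (z1 * z15) + (38629336404402263520) * (z2 *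 z2) + (22958030659040436960) * (z2 * z3) + (-44081946269931810240) * (z2 * z4) + (862326591994707840) * (z2 * z5) + (-14376930846553154880) * (z2 * z6) + (1199783545343903520) * (z2 * z7) + (2256125469122004480) * (z2 * z8) + (11788390656760798080) * (z2 * z9) + (-17848350840068068320) * (z2 * z10) + (-52974395216678295360) * (z2 * z11) + (77554615767927217920) * (z2 * z12) + (44123623292466637920) * (z2 * z13) + (-37287590137146629280) * (z2 * z14) + (-26323377448232985120) * (z2 * z15) + (6458841427956869952) * (z3 * z3) + (-25074871731119950740) * (z3 * z4) + (13189126475690605440) * (z3 * z5) + (-9375527738716723584) * (z3 * z6) + (637009825013321760) * (z3 * z7) + (2705873992268166720) * (z3 * z8) + (1128447015573477600) * (z3 * z9) + (-4359004328420501760) * (z3 * z10) + (-27587228329118802960) * (z3 * z11) + (36889581188326138272) * (z3 * z12) + (4149021895441523100) * (z3 * z13) + (-1673252687351044800) * (z3 * z14) + (-11418246527592864960) * (z3 * z15) + (39336582318104831760) * (z4 * z4) + (-48228478133090935680) * (z4 * z5) + (3546843875872577280) * (z4 * z6) + (21008765223259173360) * (z4 * z7) + (-8672488824181422240) * (z4 * z8) + (6878117748625643520) * (z4 * z9) + (3605359393681325280) * (z4 * z10) + (52634865474837565920) * (z4 * z11) + (-93687023793621978720) * (z4 * z12) + (24803755651717922880) * (z4 * z13) + (-14986086120601596000) * (z4 * z14) + (29345910639660014400) * (z4 * z15) + (57488771345370084720) * (z5 * z5) + (-135755512231370391360) * (z5 * z6) + (62898124366424627280) * (z5 * z7) + (10475931260607452640)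 * (z5 * z8) + (-10847810476771107840) * (z5 * z9) + (430080322234923360) * (z5 * z10) + (-50021055897255162720) * (z5 * z11) + (95761885073647272480) * (z5 * z12) + (-87072685847862755040) * (z5 * z13) + (60845669774727757920) * (z5 * z14) + (-21161423766684801600) * (z5 * z15) + (169627210981304796720) * (z6 * z6) + (-223369486997502605760) * (z6 * z7) + (-13917738326403431520) * (z6 * z8) + (6640958139532516800) * (z6 * z9) + (17008603668776079360) * (z6 * z10) + (71118991782727368480) * (z6 * z11) + (-118493702310010547520) * (z6 * z12) + (76814653566207997440) * (z6 * z13) + (-71722697253326159040) * (z6 * z14) + (39665358014035834080) * (z6 * z15) + (81392866922487360240) * (z7 * z7) + (7520810274671934240) * (z7 * z8) + (-2948238862348459680) * (z7 * z9) + (-12743724898653708960) * (z7 * z10) + (-34278122500143762240) * (z7 * z11) + (50852966064868487520) * (z7 * z12) + (-30343492503166883040) * (z7 * z13) + (35976190424997382560) * (z7 * z14) + (-20306316999772964160) * (z7 * z15) + (1810435186365165360) * (z8 * z8) + (-3338184276760956480) * (z8 * z9) + (-787356859924514880) * (z8 * z10) + (-8911523258820262080) * (z8 * z11) + (14311568139794845920) * (z8 * z12) + (-9498949188345096480) * (z8 * z13) + (8371957782667358880) * (z8 * z14) + (-4631343117473872800) * (z8 * z15) + (6880522416173406000) * (z9 * z9) + (-7310547689888635920) * (z9 * z10) + (-7512961626114104160) * (z9 * z11) + (-662791587486668640) * (z9 * z12) + (38846245568625855360) * (z9 * z13) + (-44338180191098713920) * (z9 * z14) + (12414500874874818720) *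 (z9 * z15) + (4360441575237557040) * (z10 * z10) + (16265602153594553760) * (z10 * z11) + (-17638125836485714560) * (z10 * z12) + (-24165348441204690720) * (z10 * z13) + (27447690531702561120) * (z10 * z14) + (-2381797005080613120) * (z10 * z15) + (39928316852921056560) * (z11 * z11) + (-103535459095494666240) * (z11 * z12) + (-14377000715828150400) * (z11 * z13) + (19060000517282044320) * (z11 * z14) + (20158124267507466240) * (z11 * z15) + (87886418359098078720) * (z12 * z12) + (-36594323900882748000) * (z12 * z13) + (10997307435503188800) * (z12 * z14) + (-43048824235210553760) * (z12 * z15) + (87484081961475959760) * (z13 * z13) + (-158323416148594176480) * (z13 * z14) + (32865738395867657280) * (z13 * z15) + (94660209635276244960) * (z14 * z14) + (-57847742212978317600) * (z14 * z15) + (21852361027115498880) * (z15 * z15).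

Definition B00r (z0 z1 z2 z3 z4 z5 z6 z7 z8 z9 z10 z11 z12 z13 z14 z15 : R) : R :=
  (112078206498448990800000000) * ((100000000) * z0 + (-179812205) * z1 + (-82812656) * z2 + (-91424180) * z3 + (218024943) * z4 + (96264365) * z5 + (-342385695) * z6 + (246459605) * z7 + (-31089396) * z8 + (127561376) * z9 + (-59149281) * z10 + (-38967816) * z11 + (-16714950) * z12 + (191059403) * z13 + (-366645015) * z14 + (203926834) * z15) ^ 2 + (1624323583418057121600000000) * ((100000000) * z1 + (-103473995) * z2 + (-42673230) * z3 + (26498722) * z4 + (-18099202) * z5 + (85565142) * z6 + (-49779358) * z7 + (2016595) * z8 + (-35707341) * z9 + (31621751) * z10 + (102762395) * z11 + (-109950314) * z12 + (-82040184) * z13 + (67911823) * z14 + (20301592) * z15) ^ 2 + (2046812929158894296400000000) * ((100000000) * z2 + (16895284) * z3 + (-76038198) * z4 + (-8390545) * z5 + (19616186) * z6 + (-26769779) * z7 + (5757470) * z8 + (5260056) * z9 + (-20316147) * z10 + (-46790119) * z11 + (98407829) * z12 + (49082179) * z13 + (-51946672) * z14 + (-38385276) * z15) ^ 2 + (197871993491914581840000000) * ((100000000) * z3 + (-294995388) * z4 + (334385883) * z5 + (-148756300) * z6 + (16130026) * z7 + (49276972) * z8 + (-39705388) * z9 + (5500722) * z10 + (-275523734) * z11 + (366358493) * z12 + (-169388789) * z13 + (96537046) * z14 + (-44722211) * z15) ^ 2 + (381367283212419744240000000) * ((100000000) * z4 + (-196000783) * z5 + (21681191) * z6 + (89146415)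 * z7 + (2860325) * z8 + (9437621) * z9 + (-25011996) * z10 + (-13593640) * z11 + (-131157116) * z12 + (236409865) * z13 + (-102437530) * z14 + (6066995) * z15) ^ 2 + (1899723589951444377120000000) * ((100000000) * z5 + (-262501955) * z6 + (170883082) * z7 + (14133220) * z8 + (-23303542) * z9 + (-4209101) * z10 + (-27153775) * z11 + (65666404) * z12 + (-96265219) * z13 + (112850987) * z14 + (-49642565) * z15) ^ 2 + (834478439890928873040000000) * ((100000000) * z6 + (-111205125) * z7 + (-2259653) * z8 + (1190380) * z9 + (11084478) * z10 + (1458193) * z11 + (-47253325) * z12 + (2689504) * z13 + (32129841) * z14 + (3060212) * z15) ^ 2 + (21620732735626184160000000) * ((100000000) * z7 + (21005865) * z8 + (-53346712) * z9 + (-30755667) * z10 + (-11786548) * z11 + (-10519532) * z12 + (-180414718) * z13 + (130408845) * z14 + (40740815) * z15) ^ 2 + (74962355039241349680000000) * ((100000000) * z8 + (-18759735) * z9 + (-45678503) * z10 + (-125164613) * z11 + (136265202) * z12 + (-43757148) * z13 + (-74705563) * z14 + (70745977) * z15) ^ 2 + (146129999127123931920000000) * ((100000000) * z9 + (-63001643) * z10 + (-16716005) * z11 + (-71523776) * z12 + (320885343) * z13 + (-430610410) * z14 + (168004799) * z15) ^ 2 + (36048609928530239040000000) * ((100000000) * z10 + (-57964) * z11 + (-21308995) * z12 + (-64345919) * z13 + (286944812) * z14 + (-272021508) * z15) ^ 2 + (41051273307967802880000000) * ((100000000) * z11 + (-54565020) * z12 + (-148710015) * z13 + (100667815) * z14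 + (4268588) * z15) ^ 2 + (294189787629624126240000000) * ((100000000) * z12 + (-97927764) * z13 + (-26895832) * z14 + (31175631) * z15) ^ 2 + (315317976911169392160000000) * ((100000000) * z13 + (-96542610) * z14 + (9599225) * z15) ^ 2 + (125875408680605984400000000) * ((100000000) * z14 + (-81410412) * z15) ^ 2 + (5261383482306391440000000) * ((100000000) * z15) ^ 2 + (19135934796577271400000000000000000) * (z0 + z1) ^ 2 + (11173198720866756480000000000000000) * (z0 + z2) ^ 2 + (10288746009571754400000000000000000) * (z0 + z3) ^ 2 + (17870859220757752440000000000000000) * (z0 - z4) ^ 2 + (4833856368425284200000000000000000) * (z0 - z5) ^ 2 + (29203153993710660600000000000000000) * (z0 + z6) ^ 2 + (17140763898521663400000000000000000) * (z0 - z7) ^ 2 + (5511607726078155680000000000000000) * (z0 + z8) ^ 2 + (6042584073225934080000000000000000) * (z0 - z9) ^ 2 + (439601817099561480000000000000000) * (z0 + z10) ^ 2 + (4170855665888009280000000000000000) * (z0 + z11) ^ 2 + (337653479877246000000000000000000) * (z0 + z12) ^ 2 + (14384104360820049240000000000000000) * (z0 - z13) ^ 2 + (30693179490860086200000000000000000) * (z0 + z14) ^ 2 + (12630076700433912720000000000000000) * (z0 - z15) ^ 2 + (37245209163497881261331616000000000) * (z1 + z2) ^ 2 + (75024345561334508643824520000000000) * (z1 - z3) ^ 2 + (20447221515659285850805302000000000) * (z1 + z4) ^ 2 + (61034775477053186882463390000000000) * (z1 - z5) ^ 2 + (130616556143542637864926230000000000) * (z1 - z6) ^ 2 + (80320613457991300642217970000000000)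 * (z1 + z7) ^ 2 + (87480342374901630951540744000000000) * (z1 - z8) ^ 2 + (52378118650202714738905536000000000) * (z1 - z9) ^ 2 + (81128977386257733047481366000000000) * (z1 + z10) ^ 2 + (58628805823224305016972624000000000) * (z1 - z11) ^ 2 + (963189529407416885874300000000000) * (z1 - z12) ^ 2 + (37633407141573970939470258000000000) * (z1 - z13) ^ 2 + (56663497743107986141120710000000000) * (z1 - z14) ^ 2 + (27439021281817967690392524000000000) * (z1 - z15) ^ 2 + (33685131402104804192595024000000000) * (z2 - z3) ^ 2 + (68298372154123595454200630400000000) * (z2 + z4) ^ 2 + (109896093951899314988296368000000000) * (z2 + z5) ^ 2 + (166878479650060786851170928000000000) * (z2 + z6) ^ 2 + (26558232585089009689252368000000000) * (z2 + z7) ^ 2 + (675416730793170384839620800000000) * (z2 - z8) ^ 2 + (128473483683899982746411092800000000) * (z2 + z9) ^ 2 + (163537739041865528385362116800000000) * (z2 - z10) ^ 2 + (161522500851395296011562363200000000) * (z2 + z11) ^ 2 + (47765588945315199140630448000000000) * (z2 - z12) ^ 2 + (19825268364088187672358086400000000) * (z2 + z13) ^ 2 + (79312359275396207767150344000000000) * (z2 + z14) ^ 2 + (32402610348461590728998707200000000) * (z2 + z15) ^ 2 + (59634655159294607754014452800000000) * (z3 + z4) ^ 2 + (51789619453334180156955216000000000) * (z3 + z5) ^ 2 + (54354601471612684803618657600000000) * (z3 - z6) ^ 2 + (53442915970747698734865926400000000) * (z3 + z7) ^ 2 + (1443654567346766835924864000000000) * (z3 + z8) ^ 2 + (72143095519412022169374710400000000)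 * (z3 + z9) ^ 2 + (56347636337704664997633388800000000) * (z3 - z10) ^ 2 + (4064893285944899378087409600000000) * (z3 - z11) ^ 2 + (13179178648718303931727617600000000) * (z3 + z12) ^ 2 + (57805731785570737250611929600000000) * (z3 + z13) ^ 2 + (40176360279999000965256148800000000) * (z3 - z14) ^ 2 + (32705207991231037131639369600000000) * (z3 + z15) ^ 2 + (3260665000042181018338811760000000) * (z4 + z5) ^ 2 + (1794344654984026294486537200000000) * (z4 - z6) ^ 2 + (68398620045397671709306907280000000) * (z4 - z7) ^ 2 + (92528557214357163684777632640000000) * (z4 + z8) ^ 2 + (106549757838998745655473048960000000) * (z4 - z9) ^ 2 + (97431251387983802891635073040000000) * (z4 + z10) ^ 2 + (68125438923623311194392107680000000) * (z4 - z11) ^ 2 + (59889221160469994461012004160000000) * (z4 + z12) ^ 2 + (59750673176302534321626210480000000) * (z4 - z13) ^ 2 + (33160705019372297924174938320000000) * (z4 + z14) ^ 2 + (27554218363011001981346707680000000) * (z4 + z15) ^ 2 + (95477407565191003729884386880000000) * (z5 - z6) ^ 2 + (61122206250171362681271366480000000) * (z5 + z7) ^ 2 + (34627510043233687590292442160000000) * (z5 + z8) ^ 2 + (100137760028038216969731726480000000) * (z5 + z9) ^ 2 + (61880925579418586421749928960000000) * (z5 - z10) ^ 2 + (280151863316024964854269680000000) * (z5 + z11) ^ 2 + (49638528613258572484196219520000000) * (z5 + z12) ^ 2 + (88834878947248847293182382080000000) * (z5 + z13) ^ 2 + (77561050114308165346228407120000000) * (z5 - z14) ^ 2 + (137623056903478340453744765280000000)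 * (z5 - z15) ^ 2 + (62283475596435699609058255200000000) * (z6 - z7) ^ 2 + (275345699565057175266021810000000000) * (z6 - z8) ^ 2 + (64396927519528904185166321040000000) * (z6 - z9) ^ 2 + (20016469710724012109674730640000000) * (z6 + z10) ^ 2 + (392373140633341319531251972800000000) * (z6 - z11) ^ 2 + (115660671709370952466637375040000000) * (z6 + z12) ^ 2 + (212509583485904812235667739200000000) * (z6 + z13) ^ 2 + (326231366521532224836027344400000000) * (z6 - z14) ^ 2 + (120895024058651484071875645200000000) * (z6 + z15) ^ 2 + (221155367851543485029436486720000000) * (z7 + z8) ^ 2 + (17817621367258673905741196400000000) * (z7 + z9) ^ 2 + (15494165829591615080972497440000000) * (z7 - z10) ^ 2 + (202457463703855712045642108160000000) * (z7 + z11) ^ 2 + (68270517125295971542636900320000000) * (z7 + z12) ^ 2 + (47534339285608336914384712080000000) * (z7 - z13) ^ 2 + (194902422294284270000323368480000000) * (z7 + z14) ^ 2 + (129330078239938646378109962160000000) * (z7 - z15) ^ 2 + (24188822477607532863197748240000000) * (z8 + z9) ^ 2 + (26733547931819802322353904800000000) * (z8 - z10) ^ 2 + (43496705238990125347856751120000000) * (z8 - z11) ^ 2 + (29724754459839559676128132560000000) * (z8 + z12) ^ 2 + (11433550975014714873827900400000000) * (z8 + z13) ^ 2 + (11272375992392247683879969040000000) * (z8 + z14) ^ 2 + (17469297150426298224947980080000000) * (z8 - z15) ^ 2 + (81759261123291097772450060400000000) * (z9 - z10) ^ 2 + (123103948259695987217425231440000000) * (z9 - z11) ^ 2 + (161412907607858189101161863520000000)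 * (z9 + z12) ^ 2 + (104564558823765531061102131600000000) * (z9 + z13) ^ 2 + (78715147334097898660560123600000000) * (z9 - z14) ^ 2 + (3601921865215623573002258880000000) * (z9 + z15) ^ 2 + (90084101535455981183043493680000000) * (z10 + z11) ^ 2 + (208219945635201269297560752720000000) * (z10 - z12) ^ 2 + (121435328154768856196448720240000000) * (z10 - z13) ^ 2 + (57847884834523370091313929120000000) * (z10 + z14) ^ 2 + (91346765868523287208353627360000000) * (z10 + z15) ^ 2 + (129114775011011144701594248000000000) * (z11 + z12) ^ 2 + (33080910602493532420842520320000000) * (z11 - z13) ^ 2 + (2102987286967628105758153440000000) * (z11 + z14) ^ 2 + (71133614140337408955241346400000000) * (z11 - z15) ^ 2 + (81828914470633367970479426880000000) * (z12 + z13) ^ 2 + (119144702360574396572022356400000000) * (z12 + z14) ^ 2 + (125508837989544024197162700720000000) * (z12 - z15) ^ 2 + (113169190642910488700339085360000000) * (z13 - z14) ^ 2 + (202969771467747739326837005040000000) * (z13 + z15) ^ 2 + (52463247083166477213606590640000000) * (z14 - z15) ^ 2 + (1164295831542409285902400000000000000000) * z0 ^ 2 + (1163631952463747183245059498540000000000) * z1 ^ 2 + (1163244865924954226736935056137600000000) * z2 ^ 2 + (1163887433891740391533487521766400000000) * z3 ^ 2 + (1163591686279477533138995330605440000000) * z4 ^ 2 + (1163531868251392318506191692408080000000) * z5 ^ 2 + (1162281851851871087016751680532560000000) * z6 ^ 2 + (1163352194886847798644219735687360000000) * z7 ^ 2 + (1163412092430852147609853087969920000000) * z9 ^ 2 +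 (1163384761078469417077434977581680000000) * z10 ^ 2 + (1162912957416220706125592707550880000000) * z11 ^ 2 + (1163294355160451475101632007608560000000) * z12 ^ 2 + (1163364495255951454900051322720400000000) * z13 ^ 2 + (1163135384358043109962511485802880000000) * z14 ^ 2 + (1163321513614701930000159020973600000000) * z15 ^ 2.

Definition B00n (z0 z1 z2 z3 z4 z5 z6 z7 z8 z9 z10 z11 z12 z13 z14 z15 : R) : R :=
  (1163617104082117144005752183290720000000) * z8 ^ 2.

Lemma B00_eq : forall z0 z1 z2 z3 z4 z5 z6 z7 z8 z9 z10 z11 z12 z13 z14 z15, (1000000000000000000000000) * B00q z0 z1 z2 z3 z4 z5 z6 z7 z8 z9 z10 z11 z12 z13 z14 z15 = B00r z0 z1 z2 z3 z4 z5 z6 z7 z8 z9 z10 z11 z12 z13 z14 z15 + B00n z0 z1 z2 z3 z4 z5 z6 z7 z8 z9 z10 z11 z12 z13 z14 z15.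
Proof. intros; unfold B00q, B00r, B00n; ring. Qed.

Definition B01q (z0 z1 z2 z3 z4 z5 z6 z7 z8 z9 z10 : R) : R :=
  (37356) * (z0 * z0) + (-71450) * (z0 * z1) + (-150216) * (z0 * z2) + (376100) * (z0 * z3) + (-444044) * (z0 * z4) + (223536) * (z0 * z5) + (10) * (z0 * z6) + (133948) * (z0 * z7) + (-111394) * (z0 * z8) + (-33364) * (z0 * z9) + (16654) * (z0 * z10) + (188829) * (z1 * z1) + (87790) * (z1 * z2) + (-689136) * (z1 * z3) + (723630) * (z1 * z4) + (-355324) * (z1 * z5) + (-56) * (z1 * z6) + (18252) * (z1 * z7) + (218452) * (z1 * z8) + (66002) * (z1 * z9) + (-290668) * (z1 * z10) + (289067) * (z2 * z2) + (-1537308) * (z2 * z3) + (1812918) * (z2 * z4) + (-801054) * (z2 * z5) + (66) * (z2 * z6) + (-812768) * (z2 * z7) + (848004) * (z2 * z8) + (-94350) * (z2 * z9) + (7538) * (z2 * z10) + (2746710) * (z3 * z3) + (-7186260) * (z3 * z4) + (3492048) * (z3 * z5) + (-132) * (z3 * z6) + (2225726) * (z3 * z7) + (-3092556) * (z3 * z8) + (816220) * (z3 * z9) + (107848) * (z3 * z10) + (5995919) * (z4 * z4) + (-7191734) * (z4 * z5) + (-38) * (z4 * z6) + (-2925744) * (z4 * z7) + (3807624) * (z4 * z8) + (-1831608) * (z4 * z9) + (1052430) * (z4 * z10) + (2519520) * (z5 * z5) + (170) * (z5 * z6) + (1408000) * (z5 * z7) + (-1629842) * (z5 * z8) + (1147242)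 * (z5 * z9) + (-1114988) * (z5 * z10) + (763) * (z6 * z6) + (-160) * (z6 * z7) + (68) * (z6 * z8) + (444) * (z6 * z9) + (-496) * (z6 * z10) + (723564) * (z7 * z7) + (-1460764) * (z7 * z8) + (280708) * (z7 * z9) + (-178178) * (z7 * z10) + (1256586) * (z8 * z8) + (-828478) * (z8 * z9) + (-184480) * (z8 * z10) + (468081) * (z9 * z9) + (-451186) * (z9 * z10) + (424420) * (z10 * z10).

Definition B01r (z0 z1 z2 z3 z4 z5 z6 z7 z8 z9 z10 : R) : R :=
  (3715600000000) * ((100000000) * z0 + (-96148670) * z1 + (-202142319) * z2 + (506109377) * z3 + (-597540101) * z4 + (300807407) * z5 + (13457) * z6 + (180250834) * z7 + (-149900420) * z8 + (-44897190) * z9 + (22410916) * z10) ^ 2 + (15427989000000) * ((100000000) * z1 + (-18356471) * z2 + (-106145025) * z3 + (96152390) * z4 + (-45500781) * z5 + (-15033) * z6 + (47654047) * z7 + (36086411) * z8 + (10993966) * z9 + (-89012056) * z10) ^ 2 + (13184333000000) * ((100000000) * z2 + (-317487430) * z3 + (367776863) * z4 + (-142201011) * z5 + (29467) * z6 + (-195311671) * z7 + (243952110) * z8 + (-58996425) * z9 + (-3494397) * z10) ^ 2 + (29198982000000) * ((100000000) * z3 + (-264575592) * z4 + (174872488) * z5 + (2541) * z6 + (11778649) * z7 + (-63065763) * z8 + (90274432) * z9 + (-50896742) * z10) ^ 2 + (69916599000000) * ((100000000) * z4 + (-117288924) * z5 + (-12883) * z6 + (-13634522) * z7 + (-21830839)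 * z8 + (-6912046) * z9 + (47451600) * z10) ^ 2 + (2983332000000) * ((100000000) * z5 + (-13301) * z6 + (-7165352) * z7 + (-72680650) * z8 + (10992079) * z9 + (-8617477) * z10) ^ 2 + (56297000000) * ((100000000) * z6 + (-2757042) * z7 + (-11151285) * z8 + (42138270) * z9 + (-39474789) * z10) ^ 2 + (4746706000000) * ((100000000) * z7 + (-61105906) * z8 + (-56825866) * z9 + (31378377) * z10) ^ 2 + (18522649000000) * ((100000000) * z8 + (-61546031) * z9 + (-17843484) * z10) ^ 2 + (8539014000000) * ((100000000) * z9 + (-74814822) * z10) ^ 2 + (821192000000) * ((100000000) * z10) ^ 2 + (174800000000000000000) * (z0 - z1) ^ 2 + (47640000000000000000) * (z0 + z2) ^ 2 + (118120000000000000000) * (z0 - z3) ^ 2 + (72440000000000000000) * (z0 - z4) ^ 2 + (144920000000000000000) * (z0 - z5) ^ 2 + (82920000000000000000) * (z0 - z6) ^ 2 + (118960000000000000000) * (z0 + z7) ^ 2 + (55200000000000000000) * (z0 + z8) ^ 2 + (83600000000000000000) * (z0 - z9) ^ 2 + (51040000000000000000) * (z0 + z10) ^ 2 + (157276673612000000000) * (z1 + z2) ^ 2 + (1859043309004000000000) * (z1 + z3) ^ 2 + (1562120903452000000000) * (z1 - z4) ^ 2 + (500879552564000000000) * (z1 + z5) ^ 2 + (409090177164000000000) * (z1 + z6) ^ 2 + (1160726757832000000000) * (z1 - z7) ^ 2 + (21278034160000000000) * (z1 + z8) ^ 2 + (299542888120000000000) * (z1 + z9) ^ 2 + (1785364118832000000000)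 * (z1 + z10) ^ 2 + (4278815812222675000000) * (z2 - z3) ^ 2 + (4414632716431010000000) * (z2 + z4) ^ 2 + (1779290228590839000000) * (z2 - z5) ^ 2 + (387687969375227000000) * (z2 - z6) ^ 2 + (2897498274715907000000) * (z2 - z7) ^ 2 + (2513550096408609000000) * (z2 + z8) ^ 2 + (1275814223901846000000) * (z2 - z9) ^ 2 + (360245538212536000000) * (z2 + z10) ^ 2 + (19388092217510080000000) * (z3 - z4) ^ 2 + (10251556246595285000000) * (z3 + z5) ^ 2 + (1281677950537405000000) * (z3 + z6) ^ 2 + (10415897176519785000000) * (z3 + z7) ^ 2 + (11842044049863125000000) * (z3 - z8) ^ 2 + (4524032394146600000000) * (z3 + z9) ^ 2 + (2549241961777230000000) * (z3 - z10) ^ 2 + (22030980065481249000000) * (z4 - z5) ^ 2 + (656739923454259000000) * (z4 - z6) ^ 2 + (11187507809085405000000) * (z4 - z7) ^ 2 + (16558250219920028000000) * (z4 + z8) ^ 2 + (5636090849889177000000) * (z4 - z9) ^ 2 + (6119705335179575000000) * (z4 + z10) ^ 2 + (855653059558440000000) * (z5 - z6) ^ 2 + (5143118395005894000000) * (z5 + z7) ^ 2 + (13793089959640527000000) * (z5 - z8) ^ 2 + (3165937028955111000000) * (z5 + z9) ^ 2 + (4856284997755443000000) * (z5 - z10) ^ 2 + (759730918233244000000) * (z6 + z7) ^ 2 + (1780468360294660000000) * (z6 - z8) ^ 2 + (1547870967277779000000) * (z6 + z9) ^ 2 + (581201823782965000000) * (z6 - z10) ^ 2 + (4676982739571681000000)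 * (z7 - z8) ^ 2 + (2774704196655819000000) * (z7 + z9) ^ 2 + (400240378527581000000) * (z7 - z10) ^ 2 + (5181519952511284000000) * (z8 - z9) ^ 2 + (1617141644649429000000) * (z8 + z10) ^ 2 + (544849233373489000000) * (z9 + z10) ^ 2 + (199983237878950122002000000) * z2 ^ 2 + (199948527979630736590000000) * z3 ^ 2 + (199947038774067454992000000) * z4 ^ 2 + (199956714585372722858000000) * z5 ^ 2 + (199964772383916643796000000) * z7 ^ 2 + (199950430022994186810000000) * z8 ^ 2 + (199975388318830128297000000) * z9 ^ 2 + (199982600603661184844000000) * z10 ^ 2.

Definition B01n (z0 z1 z2 z3 z4 z5 z6 z7 z8 z9 z10 : R) : R :=
  (199999050360000000000000000) * z0 ^ 2 + (199989880445460420000000000) * z1 ^ 2 + (199993728993907390978000000) * z6 ^ 2.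

Lemma B01_eq : forall z0 z1 z2 z3 z4 z5 z6 z7 z8 z9 z10, (1000000000000000000000000) * B01q z0 z1 z2 z3 z4 z5 z6 z7 z8 z9 z10 = B01r z0 z1 z2 z3 z4 z5 z6 z7 z8 z9 z10 + B01n z0 z1 z2 z3 z4 z5 z6 z7 z8 z9 z10.
Proof. intros; unfold B01q, B01r, B01n; ring. Qed.

Definition B10q (z0 z1 z2 z3 z4 z5 z6 z7 z8 z9 z10 z11 z12 z13 z14 z15 : R) : R :=
  (25875955592650548000) * (z0 * z0) + (-45383954465454917130) * (z0 * z1) + (-233687738824406100000) * (z0 * z2) + (-113442378131646316506) * (z0 * z3) + (316219775009050155474) * (z0 * z4) + (-152493194723450080500) * (z0 * z5) + (201489609902468706000) * (z0 * z6) + (-84047980875826968000) * (z0 * z7) + (-55934676140473871260) * (z0 * z8) + (105225126549462612000) * (z0 * z9) + (-10383309451331403678) * (z0 * z10) + (177633920599391196486) * (z0 * z11) + (-421780434609413880000) * (z0 * z12) + (244486070924627262654) * (z0 * z13) + (-343063380423627864000) * (z0 * z14) + (307860037339114260000) * (z0 * z15) + (513092153418090246000) * (z1 * z1) + (-469714541842069524000) * (z1 * z2) + (-451314177150020184000) * (z1 * z3) + (307314474750190908000) * (z1 * z4) + (-1270856609723200500000) * (z1 * z5) + (2270012860893301524000) * (z1 * z6) + (-1319125034535646338000) * (z1 * z7) + (-41870327528981952000) * (z1 * z8) + (-407902940985407868000) * (z1 * z9) + (470899990541160180000) * (z1 * z10) + (1242677457751569840000) * (z1 * z11) + (-1266208847326102680000)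 * (z1 * z12) + (-425866622708735208000) * (z1 * z13) + (1041066753532205400000) * (z1 * z14) + (-542409446767200012000) * (z1 * z15) + (815136010296796188000) * (z2 * z2) + (950906567712048948000) * (z2 * z3) + (-2045209050839174220000) * (z2 * z4) + (1552758173547625044000) * (z2 * z5) + (-2039580789616305936000) * (z2 * z6) + (929355680961659952000) * (z2 * z7) + (296001474640499628000) * (z2 * z8) + (-155305133338062708000) * (z2 * z9) + (-288947589085743588000) * (z2 * z10) + (-1855814115986839008000) * (z2 * z11) + (3097272354889737024000) * (z2 * z12) + (-539141311429284564000) * (z2 * z13) + (523070213692398372000) * (z2 * z14) + (-1110569214833998920000) * (z2 * z15) + (295656058412240526000) * (z3 * z3) + (-1141085494054229724000) * (z3 * z4) + (1059064787649072204000) * (z3 * z5) + (-1487320357318695900000) * (z3 * z6) + (725822843874970842000) * (z3 * z7) + (161819278743478356000) * (z3 * z8) + (6074551216902168000) * (z3 * z9) + (-245680458300809532000) * (z3 * z10) + (-1223566755430399380000) * (z3 * z11) + (1873508509879454448000) * (z3 * z12) + (-173174491540146096000) * (z3 * z13) + (38229847179736212000) * (z3 * z14) + (-466782361268090868000) * (z3 * z15) + (1352652861082434912000) * (z4 * z4) + (-1559788769344049244000) * (z4 * z5) + (1566158809369786632000) * (z4 * z6) + (-516432050323865676000) * (z4 * z7) + (-355519907667412488000) * (z4 * z8) + (243852794515718388000) * (z4 * z9) + (248419042758654768000) * (z4 * z10) + (2101415971353278580000) * (z4 * z11) + (-3674261852584094772000) * (z4 * z12) + (513209038892718168000) * (z4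 * z13) + (-603068495708414736000) * (z4 * z14) + (1522530687330709056000) * (z4 * z15) + (1315252274860301778000) * (z5 * z5) + (-4833804480116307696000) * (z5 * z6) + (2769854403349151118000) * (z5 * z7) + (327527073762436548000) * (z5 * z8) + (6858251584768584000) * (z5 * z9) + (-614998965535878924000) * (z5 * z10) + (-2440376860846752828000) * (z5 * z11) + (3580965700804556064000) * (z5 * z12) + (-959785205832104652000) * (z5 * z13) + (592683010224288984000) * (z5 * z14) + (-655521980545363932000) * (z5 * z15) + (5186194389824910462000) * (z6 * z6) + (-6327696042748332252000) * (z6 * z7) + (-586743539605711488000) * (z6 * z8) + (267353034038482392000) * (z6 * z9) + (1021685598892406448000) * (z6 * z10) + (3712834641455267328000) * (z6 * z11) + (-5558358177723182832000) * (z6 * z12) + (3022742799252015840000) * (z6 * z13) + (-2621249782003488636000) * (z6 * z14) + (1159116424954740252000) * (z6 * z15) + (1974340354089239136000) * (z7 * z7) + (321868826975716020000) * (z7 * z8) + (-190785624546725208000) * (z7 * z9) + (-572300978220179208000) * (z7 * z10) + (-1929546579645652968000) * (z7 * z11) + (2874678742901301336000) * (z7 * z12) + (-1983459458964071088000) * (z7 * z13) + (1785286323074486232000) * (z7 * z14) + (-575245094795302932000) * (z7 * z15) + (37681373371021380000) * (z8 * z8) + (-110325331949800968000) * (z8 * z9) + (-28700551436284728000) * (z8 * z10) + (-306019273064961456000) * (z8 * z11) + (607075207507428660000) * (z8 * z12) + (-348789167509510728000) * (z8 * z13) + (426045080481952932000) * (z8 * z14) + (-334354757539394592000) * (z8 *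 z15) + (216998393110200702000) * (z9 * z9) + (-186141937857335460000) * (z9 * z10) + (-173278422086701932000) * (z9 * z11) + (-298516186296380052000) * (z9 * z12) + (1044042893525035404000) * (z9 * z13) + (-1515865158496136448000) * (z9 * z14) + (831055724604525420000) * (z9 * z15) + (111411071371033434000) * (z10 * z10) + (636917248223952696000) * (z10 * z11) + (-697831611140880216000) * (z10 * z12) + (-216425610616227012000) * (z10 * z13) + (502968532154208120000) * (z10 * z14) + (-205272436473087984000) * (z10 * z15) + (1338979589526801222000) * (z11 * z11) + (-3836645325723161952000) * (z11 * z12) + (189106432970999544000) * (z11 * z13) + (308864117045195712000) * (z11 * z14) + (592536284746798392000) * (z11 * z15) + (3125516135940738540000) * (z12 * z12) + (-1501353310079566944000) * (z12 * z13) + (1370691070032424140000) * (z12 * z14) + (-2037907711602142380000) * (z12 * z15) + (1568467406664430272000) * (z13 * z13) + (-4123772820195272244000) * (z13 * z14) + (1986211726154936280000) * (z13 * z15) + (2841008739280960248000) * (z14 * z14) + (-2818705593336452820000) * (z14 * z15) + (1014894742045810626000) * (z15 * z15).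

Definition B10r (z0 z1 z2 z3 z4 z5 z6 z7 z8 z9 z10 z11 z12 z13 z14 z15 : R) : R :=
  (2584684279178541540000000000) * ((100000000) * z0 + (-87793998) * z1 + (-452062434) * z2 + (-219451127) * z3 + (611718364) * z4 + (-294993846) * z5 + (389776049) * z6 + (-162588482) * z7 + (-108204076) * z8 + (203555082) * z9 + (-20086223) * z10 + (343627881) * z11 + (-815922525) * z12 + (472951507) * z13 + (-663646572) * z14 + (595546684) * z15) ^ 2 + (49314084657139920618000000000) * ((100000000) * z1 + (-68426531) * z2 + (-55857244) * z3 + (59307241) * z4 + (-142427512) * z5 + (248094298) * z6 + (-141228832) * z7 + (-9224303) * z8 + (-31991022) * z9 + (46820708) * z10 + (141808308) * z11 + (-165926912) * z12 + (-21416044) * z13 + (75016874) * z14 + (-27591185) * z15) ^ 2 + (5600173483198105812000000000) * ((100000000) * z2 + (54558793) * z3 + (-192356996) * z4 + (-87335438) * z5 + (487139150) * z6 + (-360449975) * z7 + (-17062874) * z8 + (93280728) * z9 + (-17770709) * z10 + (-85501210) * z11 + (63173623) * z12 + (376377735) * z13 + (-465626477) * z14 + (84768290) * z15) ^ 2 + (62032416877845414000000000) * ((100000000) * z3 + (-230785052) * z4 + (-553067379) * z5 + (1930189681) * z6 + (-1322050482) * z7 + (-106464544) * z8 + (302169542) * z9 + (26791377) * z10 + (-21232921) * z11 + (-387294087) * z12 + (1239184835) * z13 + (-1355540102) * z14 + (404420222) * z15) ^ 2 + (146452259513161602000000000) * ((100000000) * z4 + (73532451) * z5 + (-436798786) *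 z6 + (320020698) * z7 + (26950732) * z8 + (-105139673) * z9 + (18606421) * z10 + (16757855) * z11 + (48813211) * z12 + (-365766730) * z13 + (502686174) * z14 + (-174288250) * z15) ^ 2 + (2745300496343190786000000000) * ((100000000) * z5 + (-247674205) * z6 + (159965780) * z7 + (15243725) * z8 + (-32563672) * z9 + (-7043002) * z10 + (-17828174) * z11 + (72984994) * z12 + (-142664479) * z13 + (136866220) * z14 + (-37362754) * z15) ^ 2 + (176333310574891470000000000) * ((100000000) * z6 + (-74518375) * z7 + (-6902321) * z8 + (27101479) * z9 + (-4430693) * z10 + (861327) * z11 + (-20461757) * z12 + (76895240) * z13 + (-116338222) * z14 + (51688232) * z15) ^ 2 + (14009663002539204000000000) * ((100000000) * z7 + (-1931598) * z8 + (3878246) * z9 + (-12260703) * z10 + (-7489484) * z11 + (-1886515) * z12 + (35414041) * z13 + (-38826845) * z14 + (16527275) * z15) ^ 2 + (10811688061598424000000000) * ((100000000) * z8 + (-61223260) * z9 + (22897392) * z10 + (-26517716) * z11 + (68858625) * z12 + (-191751757) * z13 + (224607994) * z14 + (-77639655) * z15) ^ 2 + (31144229329253040000000000) * ((100000000) * z9 + (-52488822) * z10 + (-2221021) * z11 + (-22418913) * z12 + (217783252) * z13 + (-351554706) * z14 + (154689764) * z15) ^ 2 + (13689719947455552000000000) * ((100000000) * z10 + (9309814) * z11 + (-18167866) * z12 + (-77166468) * z13 + (208056012) * z14 + (-131390422) * z15) ^ 2 + (17295556781182680000000000) * ((100000000) * z11 + (-45826146) * z12 + (-8859079) * z13 +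 (7804986) * z14 + (-5435910) * z15) ^ 2 + (27496616491518174000000000) * ((100000000) * z12 + (-52307236) * z13 + (-7353203) * z14 + (1624530) * z15) ^ 2 + (53116951827427488000000000) * ((100000000) * z13 + (-107429757) * z14 + (31149465) * z15) ^ 2 + (50851731707676900000000000) * ((100000000) * z14 + (-60802653) * z15) ^ 2 + (16941406893549138000000000) * ((100000000) * z15) ^ 2 + (589044226804432308000000000000000000) * (z0 - z1) ^ 2 + (2775504349085749164000000000000000000) * (z0 - z2) ^ 2 + (1265331800736068442000000000000000000) * (z0 - z3) ^ 2 + (3632963408261515944000000000000000000) * (z0 + z4) ^ 2 + (1740663471294463716000000000000000000) * (z0 - z5) ^ 2 + (2326171864295642454000000000000000000) * (z0 + z6) ^ 2 + (1097823156403745772000000000000000000) * (z0 - z7) ^ 2 + (652212922993668296000000000000000000) * (z0 - z8) ^ 2 + (1235501414418489372000000000000000000) * (z0 + z9) ^ 2 + (244048257620279658000000000000000000) * (z0 - z10) ^ 2 + (2108882133236932326000000000000000000) * (z0 + z11) ^ 2 + (4965190886086581150000000000000000000) * (z0 - z12) ^ 2 + (2966643636986489922000000000000000000) * (z0 + z13) ^ 2 + (4053900925101939912000000000000000000) * (z0 - z14) ^ 2 + (3504386064189674664000000000000000000) * (z0 + z15) ^ 2 + (1393660228203828255127176720000000000) * (z1 + z2) ^ 2 + (1125097629598562062491888840000000000) * (z1 - z3) ^ 2 + (4686443335613186411185041120000000000) * (z1 - z4) ^ 2 + (1068841938477667904464234320000000000) * (z1 - z5) ^ 2 + (1004167858517989726551910920000000000)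 * (z1 - z6) ^ 2 + (99116860537236932594764560000000000) * (z1 + z7) ^ 2 + (1513413255175822878083125920000000000) * (z1 - z8) ^ 2 + (2110591118012657231283892560000000000) * (z1 - z9) ^ 2 + (1563100873184890207081073160000000000) * (z1 - z10) ^ 2 + (3206288696558131680809793480000000000) * (z1 - z11) ^ 2 + (6059978760424561294699377000000000000) * (z1 + z12) ^ 2 + (5166276393670932949730881560000000000) * (z1 - z13) ^ 2 + (4136258415345126451102481760000000000) * (z1 + z14) ^ 2 + (5660009111720249057718666720000000000) * (z1 - z15) ^ 2 + (8194028209154676992705329728000000000) * (z2 + z3) ^ 2 + (16862005271693140713248976882000000000) * (z2 - z4) ^ 2 + (10768547493445101136741508544000000000) * (z2 + z5) ^ 2 + (12438983629225631352862263276000000000) * (z2 - z6) ^ 2 + (6099827168265353981056623024000000000) * (z2 + z7) ^ 2 + (4641752715319606207892336766000000000) * (z2 + z8) ^ 2 + (4540474851824320534817647956000000000) * (z2 - z9) ^ 2 + (1629135124363393997241475584000000000) * (z2 + z10) ^ 2 + (10551805174607389413518974176000000000) * (z2 - z11) ^ 2 + (23922830495320176554176946904000000000) * (z2 + z12) ^ 2 + (10771847004753521621242740432000000000) * (z2 - z13) ^ 2 + (16452425944234392560984708172000000000) * (z2 + z14) ^ 2 + (14022736440326019929121588990000000000) * (z2 - z15) ^ 2 + (8854571713607255849206665672000000000) * (z3 - z4) ^ 2 + (7039622621986714898545431024000000000) * (z3 + z5) ^ 2 + (6888950525214063012288545964000000000) * (z3 - z6) ^ 2 + (3172773216287571073281700596000000000)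 * (z3 + z7) ^ 2 + (2646602256529074756953568528000000000) * (z3 + z8) ^ 2 + (823879017460051289827802712000000000) * (z3 - z9) ^ 2 + (437118327185012761247799840000000000) * (z3 + z10) ^ 2 + (6962016881810887854571337724000000000) * (z3 - z11) ^ 2 + (12857782964509882115632443528000000000) * (z3 + z12) ^ 2 + (1934856146469209211337137048000000000) * (z3 - z13) ^ 2 + (3916232143925566620452677380000000000) * (z3 + z14) ^ 2 + (4734979730617421577807955440000000000) * (z3 - z15) ^ 2 + (7332476896811045136091406472000000000) * (z4 - z5) ^ 2 + (1947154062005618896238212404000000000) * (z4 + z6) ^ 2 + (1037569902018863532043364640000000000) * (z4 + z7) ^ 2 + (4846665802473617898513443706000000000) * (z4 - z8) ^ 2 + (5869776494157953191334868348000000000) * (z4 + z9) ^ 2 + (2771153081472705261106110336000000000) * (z4 - z10) ^ 2 + (10503438679499640401837838528000000000) * (z4 + z11) ^ 2 + (25961338028155541449539084984000000000) * (z4 - z12) ^ 2 + (10482885487190031688316495952000000000) * (z4 + z13) ^ 2 + (17979946249083005984875130052000000000) * (z4 - z14) ^ 2 + (17950359699397610244845871786000000000) * (z4 + z15) ^ 2 + (31396543944227309772948937914000000000) * (z5 - z6) ^ 2 + (19732353732263056000537741320000000000) * (z5 + z7) ^ 2 + (5854954621256272142271100440000000000) * (z5 + z8) ^ 2 + (4503322605259151932474021806000000000) * (z5 - z9) ^ 2 + (2561347978963103323167498324000000000) * (z5 + z10) ^ 2 + (6709741414121397211169838228000000000) * (z5 - z11) ^ 2 + (18390234806524173563996577552000000000)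 * (z5 + z12) ^ 2 + (16971343756854953987726499294000000000) * (z5 - z13) ^ 2 + (23517403020743612062525875432000000000) * (z5 + z14) ^ 2 + (10280220229098685287926031528000000000) * (z5 - z15) ^ 2 + (50583622653615064365591427188000000000) * (z6 - z7) ^ 2 + (10373407404692025912649328898000000000) * (z6 - z8) ^ 2 + (12946084523501231116155285144000000000) * (z6 + z9) ^ 2 + (6590685223078630061879789298000000000) * (z6 - z10) ^ 2 + (3079129023362347628721930882000000000) * (z6 + z11) ^ 2 + (24938727953911285913772935562000000000) * (z6 - z12) ^ 2 + (49230208690953638102732253276000000000) * (z6 + z13) ^ 2 + (64609462277597569207939883820000000000) * (z6 - z14) ^ 2 + (22622181753981858262271389332000000000) * (z6 + z15) ^ 2 + (5964914385974165510158027758000000000) * (z7 + z8) ^ 2 + (8048456148819123193990711878000000000) * (z7 - z9) ^ 2 + (3702694248078497080640088858000000000) * (z7 + z10) ^ 2 + (1082829904414737601328936730000000000) * (z7 - z11) ^ 2 + (13840498215778763579745480786000000000) * (z7 + z12) ^ 2 + (31914329196746038741681286304000000000) * (z7 - z13) ^ 2 + (40879809823946465283842594664000000000) * (z7 + z14) ^ 2 + (13320085446338050295038187064000000000) * (z7 - z15) ^ 2 + (933000994417200629523140538000000000) * (z8 - z9) ^ 2 + (547443954435526761447412578000000000) * (z8 - z10) ^ 2 + (5143961316695370631604544402000000000) * (z8 - z11) ^ 2 + (9225604791527593217760721710000000000) * (z8 + z12) ^ 2 + (4059172918846875311200232514000000000) * (z8 - z13) ^ 2 + (4480330974920460689956918992000000000)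 * (z8 + z14) ^ 2 + (3581634468144088326757404618000000000) * (z8 - z15) ^ 2 + (818680093236034211808465840000000000) * (z9 - z10) ^ 2 + (3265633361858673332315712924000000000) * (z9 + z11) ^ 2 + (10853775293817019221889931700000000000) * (z9 - z12) ^ 2 + (15314225762939253477927503904000000000) * (z9 + z13) ^ 2 + (19170043513087572338476186944000000000) * (z9 - z14) ^ 2 + (11490008211021487210666018416000000000) * (z9 + z15) ^ 2 + (3985159499549680210016860602000000000) * (z10 - z11) ^ 2 + (5685179108381501335558665714000000000) * (z10 + z12) ^ 2 + (3929483207962570452706205694000000000) * (z10 - z13) ^ 2 + (3884370205715579241835857684000000000) * (z10 + z14) ^ 2 + (3519728669264320458584923284000000000) * (z10 - z15) ^ 2 + (12458066153132028908534421366000000000) * (z11 - z12) ^ 2 + (5918212800391958527795996662000000000) * (z11 + z13) ^ 2 + (13224990288567877909821816084000000000) * (z11 - z14) ^ 2 + (9050390016829995860644585968000000000) * (z11 + z15) ^ 2 + (26986186317960623477143754334000000000) * (z12 - z13) ^ 2 + (40975160585832067752582781356000000000) * (z12 + z14) ^ 2 + (27803759508842458471806087612000000000) * (z12 - z15) ^ 2 + (61226045559425997111561679980000000000) * (z13 - z14) ^ 2 + (31103435282771195698116334572000000000) * (z13 + z15) ^ 2 + (41964293792994447933579276756000000000) * (z14 - z15) ^ 2 + (29079642596615084326900000000000000000000) * z0 ^ 2 + (29073943686614356516484772565200000000000) * z1 ^ 2 + (28981725412738409059537730766708000000000) * z2 ^ 2 + (29046763028170512463731218629680000000000) * z3 ^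 2 + (28993148565731866655477700518772000000000) * z4 ^ 2 + (28961084108359539491224699896066000000000) * z5 ^ 2 + (28887361769038075971557655488814000000000) * z6 ^ 2 + (28945407553604325915030724468644000000000) * z7 ^ 2 + (29015635717155347080109357652738000000000) * z9 ^ 2 + (29069529219284635961905187843226000000000) * z10 ^ 2 + (29017809831067621729816156995762000000000) * z11 ^ 2 + (28884923721480370262331238692066000000000) * z12 ^ 2 + (28882635012394593872952020247198000000000) * z13 ^ 2 + (28828546911545310425026970949510000000000) * z14 ^ 2 + (28919235377613737165860880213184000000000) * z15 ^ 2.

Definition B10n (z0 z1 z2 z3 z4 z5 z6 z7 z8 z9 z10 z11 z12 z13 z14 z15 : R) : R :=
  (29048857759098349638245319310030000000000) * z8 ^ 2.

Lemma B10_eq : forall z0 z1 z2 z3 z4 z5 z6 z7 z8 z9 z10 z11 z12 z13 z14 z15, (1000000000000000000000000) * B10q z0 z1 z2 z3 z4 z5 z6 z7 z8 z9 z10 z11 z12 z13 z14 z15 = B10r z0 z1 z2 z3 z4 z5 z6 z7 z8 z9 z10 z11 z12 z13 z14 z15 + B10n z0 z1 z2 z3 z4 z5 z6 z7 z8 z9 z10 z11 z12 z13 z14 z15.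
Proof. intros; unfold B10q, B10r, B10n; ring. Qed.

Definition B11q (z0 z1 z2 z3 z4 z5 z6 z7 z8 z9 z10 : R) : R :=
  (771) * (z0 * z0) + (316) * (z0 * z1) + (-378) * (z0 * z2) + (68) * (z0 * z3) + (-62) * (z0 * z4) + (-6) * (z0 * z5) + (14) * (z0 * z6) + (378) * (z0 * z7) + (100) * (z0 * z8) + (-80) * (z0 * z9) + (-364) * (z0 * z10) + (3519) * (z1 * z1) + (-1868) * (z1 * z2) + (-4980) * (z1 * z3) + (4492) * (z1 * z4) + (-2378) * (z1 * z5) + (-126) * (z1 * z6) + (3336) * (z1 * z7) + (2206) * (z1 * z8) + (-124) * (z1 * z9) + (-4794) * (z1 * z10) + (1338) * (z2 * z2) + (446) * (z2 * z3) + (-250) * (z2 * z4) + (274) * (z2 * z5) + (66) * (z2 * z6) + (-1830) * (z2 * z7) + (-330) * (z2 * z8) + (306) * (z2 * z9) + (1574) * (z2 * z10) + (4280) * (z3 * z3) + (-7442) * (z3 * z4) + (3742) * (z3 * z5) + (-66) * (z3 * z6) + (-1318) * (z3 * z7) + (-3276) * (z3 * z8) + (-184) * (z3 * z9) + (4446) * (z3 * z10) + (5208) * (z4 * z4) + (-5032) * (z4 * z5) + (92) * (z4 * z6) + (796) * (z4 * z7) + (3558) * (z4 * z8) + (-492) * (z4 * z9) + (-3516) * (z4 * z10) + (2227) * (z5 * z5) + (-10) * (z5 * z6) + (-576) * (z5 * z7) + (-1802) * (z5 * z8) + (568) * (z5 * z9) + (1534) * (z5 * z10) + (763) * (z6 *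 z6) + (-190) * (z6 * z7) + (44) * (z6 * z8) + (366) * (z6 * z9) + (-342) * (z6 * z10) + (2204) * (z7 * z7) + (528) * (z7 * z8) + (-476) * (z7 * z9) + (-2556) * (z7 * z10) + (1613) * (z8 * z8) + (-204) * (z8 * z9) + (-2010) * (z8 * z10) + (1529) * (z9 * z9) + (-1344) * (z9 * z10) + (3558) * (z10 * z10).

Definition B11r (z0 z1 z2 z3 z4 z5 z6 z7 z8 z9 z10 : R) : R :=
  (57100000000) * ((100000000) * z0 + (27670753) * z1 + (-33099825) * z2 + (5954466) * z3 + (-5429072) * z4 + (-525394) * z5 + (1225919) * z6 + (33099825) * z7 + (8756567) * z8 + (-7005254) * z9 + (-31873905) * z10) ^ 2 + (327528000000) * ((100000000) * z1 + (-26919904) * z2 + (-76311274) * z3 + (68836185) * z4 + (-36276892) * z5 + (-1982638) * z6 + (49330200) * z7 + (33254090) * z8 + (-1555033) * z9 + (-71646976) * z10) ^ 2 + (83809000000) * ((100000000) * z2 + (-52331538) * z3 + (56279210) * z4 + (-21936503) * z5 + (2128180) * z6 + (-49815278) * z7 + (17271694) * z8 + (15040105) * z9 + (11340731) * z10) ^ 2 + (194113000000) * ((100000000) * z3 + (-90247820) * z4 + (44729727) * z5 + (-3793525) * z6 + (17733357) * z7 + (-37816729) * z8 + (-3220876) * z9 + (25388622) * z10) ^ 2 + (160792000000) * ((100000000) * z4 + (-50451504) * z5 + (907153) * z6 + (-9845421) * z7 + (17913060) * z8 + (-21174981) * z9 + (14847141) * z10) ^ 2 + (75798000000) * ((100000000)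 * z5 + (2069834) * z6 + (-3470276) * z7 + (-27294) * z8 + (19677881) * z9 + (-21688039) * z10) ^ 2 + (55800000000) * ((100000000) * z6 + (-7412146) * z7 + (1692649) * z8 + (31797260) * z9 + (-35373776) * z10) ^ 2 + (85583000000) * ((100000000) * z7 + (-6835792) * z8 + (-16469480) * z9 + (-11338171) * z10) ^ 2 + (68807000000) * ((100000000) * z8 + (-11420696) * z9 + (-12332358) * z10) ^ 2 + (111438000000) * ((100000000) * z9 + (-53812049) * z10) ^ 2 + (99771000000) * ((100000000) * z10) ^ 2 + (370000000000000000) * (z0 + z1) ^ 2 + (750000000000000000) * (z0 + z2) ^ 2 + (860000000000000000) * (z0 - z3) ^ 2 + (1120000000000000000) * (z0 + z4) ^ 2 + (260000000000000000) * (z0 - z5) ^ 2 + (2510000000000000000) * (z0 + z6) ^ 2 + (750000000000000000) * (z0 - z7) ^ 2 + (2430000000000000000) * (z0 + z8) ^ 2 + (340000000000000000) * (z0 + z9) ^ 2 + (2450000000000000000) * (z0 - z10) ^ 2 + (44891269352500000000) * (z1 - z2) ^ 2 + (161190768475800000000) * (z1 - z3) ^ 2 + (133671912433600000000) * (z1 + z4) ^ 2 + (89184343957800000000) * (z1 - z5) ^ 2 + (6129064099700000000) * (z1 - z6) ^ 2 + (102062469352500000000) * (z1 + z7) ^ 2 + (65220399297900000000) * (z1 + z8) ^ 2 + (13863519439800000000) * (z1 - z9) ^ 2 + (154685133448500000000) * (z1 - z10) ^ 2 + (1121688347519512000000) * (z2 + z3) ^ 2 + (1197826100505280000000) * (z2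 - z4) ^ 2 + (476962042390696000000) * (z2 + z5) ^ 2 + (40335956436556000000) * (z2 - z6) ^ 2 + (1007205913109900000000) * (z2 + z7) ^ 2 + (374877023941420000000) * (z2 - z8) ^ 2 + (306772196036296000000) * (z2 - z9) ^ 2 + (199486871536012000000) * (z2 - z10) ^ 2 + (2826325857534340000000) * (z3 + z4) ^ 2 + (1315021835320750000000) * (z3 - z5) ^ 2 + (115144669923424000000) * (z3 + z6) ^ 2 + (1069780169201876000000) * (z3 - z7) ^ 2 + (1115616137914228000000) * (z3 + z8) ^ 2 + (261839160697634000000) * (z3 + z9) ^ 2 + (416050344419970000000) * (z3 - z10) ^ 2 + (3364826525252250000000) * (z4 + z5) ^ 2 + (153677248695060000000) * (z4 - z6) ^ 2 + (1464108304928040000000) * (z4 + z7) ^ 2 + (1804170954726600000000) * (z4 - z8) ^ 2 + (634610375848030000000) * (z4 + z9) ^ 2 + (255763421536390000000) * (z4 - z10) ^ 2 + (99425516374751000000) * (z5 + z6) ^ 2 + (719893131442141000000) * (z5 - z7) ^ 2 + (870076193077137000000) * (z5 + z8) ^ 2 + (110731480469005000000) * (z5 - z9) ^ 2 + (120243293146173000000) * (z5 - z10) ^ 2 + (285738236603613000000) * (z6 + z7) ^ 2 + (110337830441897000000) * (z6 - z8) ^ 2 + (1064863306668748000000) * (z6 - z9) ^ 2 + (1201158400085098000000) * (z6 + z10) ^ 2 + (591592000507285000000) * (z7 + z8) ^ 2 + (465394094617922000000) * (z7 + z9) ^ 2 + (125858527888800000000) * (z7 + z10) ^ 2 + (400502990144110000000)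 * (z8 - z9) ^ 2 + (403312451972356000000) * (z8 - z10) ^ 2 + (825338986104585000000) * (z9 - z10) ^ 2 + (199993165358133906280000000) * z2 ^ 2 + (199988592440783892542000000) * z3 ^ 2 + (199981277213638110110000000) * z4 ^ 2 + (199992367335497043375000000) * z5 ^ 2 + (199991658184617015810000000) * z7 ^ 2 + (199997440396772218170000000) * z8 ^ 2 + (199997785425875656263000000) * z9 ^ 2 + (199996876527130844748000000) * z10 ^ 2.

Definition B11n (z0 z1 z2 z3 z4 z5 z6 z7 z8 z9 z10 : R) : R :=
  (199999988160000000000000000) * z0 ^ 2 + (199999439093501928000000000) * z1 ^ 2 + (199993555946832643980000000) * z6 ^ 2.

Lemma B11_eq : forall z0 z1 z2 z3 z4 z5 z6 z7 z8 z9 z10, (1000000000000000000000000) * B11q z0 z1 z2 z3 z4 z5 z6 z7 z8 z9 z10 = B11r z0 z1 z2 z3 z4 z5 z6 z7 z8 z9 z10 + B11n z0 z1 z2 z3 z4 z5 z6 z7 z8 z9 z10.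
Proof. intros; unfold B11q, B11r, B11n; ring. Qed.

Lemma QA_sos : forall x y w1 w2, (5822439582960000000) * QA x y w1 w2 = - ((547309320798240000000) * B00q (w1 * (x ^ 0 * y ^ 2)) (w1 * (x ^ 1 * y ^ 1)) (w1 * (x ^ 2 * y ^ 0)) (w1 * (x ^ 0 * y ^ 4)) (w1 * (x ^ 1 * y ^ 3)) (w1 * (x ^ 2 * y ^ 2)) (w1 * (x ^ 3 * y ^ 1)) (w1 * (x ^ 4 * y ^ 0)) (w2 * (x ^ 0 * y ^ 2)) (w2 * (x ^ 1 * y ^ 1)) (w2 * (x ^ 2 * y ^ 0)) (w2 * (x ^ 0 * y ^ 4)) (w2 * (x ^ 1 * y ^ 3)) (w2 * (x ^ 2 * y ^ 2)) (w2 * (x ^ 3 * y ^ 1)) (w2 * (x ^ 4 * y ^ 0)) + (3186675453538625359901990400000000) * B01q (w1 * (x ^ 0 * y ^ 1)) (w1 * (x ^ 1 * y ^ 0)) (w1 * (x ^ 0 * y ^ 3)) (w1 * (x ^ 1 * y ^ 2)) (w1 * (x ^ 2 * y ^ 1)) (w1 * (x ^ 3 * y ^ 0)) (w2 * (x ^ 1 * y ^ 0)) (w2 * (x ^ 0 * y ^ 3)) (w2 * (x ^ 1 * y ^ 2)) (w2 * (x ^ 2 * y ^ 1)) (w2 * (x ^ 3 * y ^ 0))).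
Proof. intros; unfold QA, B00q, B01q; ring. Qed.

Lemma QB_sos : forall x y w1 w2, (145560989574000000000) * QB x y w1 w2 = - ((273654660399120000000000) * B10q (w1 * (x ^ 0 * y ^ 2)) (w1 * (x ^ 1 * y ^ 1)) (w1 * (x ^ 2 * y ^ 0)) (w1 * (x ^ 0 * y ^ 4)) (w1 * (x ^ 1 * y ^ 3)) (w1 * (x ^ 2 * y ^ 2)) (w1 * (x ^ 3 * y ^ 1)) (w1 * (x ^ 4 * y ^ 0)) (w2 * (x ^ 0 * y ^ 2)) (w2 * (x ^ 1 * y ^ 1)) (w2 * (x ^ 2 * y ^ 0)) (w2 * (x ^ 0 * y ^ 4)) (w2 * (x ^ 1 * y ^ 3)) (w2 * (x ^ 2 * y ^ 2)) (w2 * (x ^ 3 * y ^ 1)) (w2 * (x ^ 4 * y ^ 0)) + (39833443169232816998774880000000000000) * B11q (w1 * (x ^ 0 * y ^ 1)) (w1 * (x ^ 1 * y ^ 0)) (w1 * (x ^ 0 * y ^ 3)) (w1 * (x ^ 1 * y ^ 2)) (w1 * (x ^ 2 * y ^ 1)) (w1 * (x ^ 3 * y ^ 0)) (w2 * (x ^ 1 * y ^ 0)) (w2 * (x ^ 0 * y ^ 3)) (w2 * (x ^ 1 * y ^ 2)) (w2 * (x ^ 2 * y ^ 1)) (w2 * (x ^ 3 * y ^ 0))).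
Proof. intros; unfold QB, B10q, B11q; ring. Qed.
Lemma B00_nonneg : forall z0 z1 z2 z3 z4 z5 z6 z7 z8 z9 z10 z11 z12 z13 z14 z15, 0 <= B00q z0 z1 z2 z3 z4 z5 z6 z7 z8 z9 z10 z11 z12 z13 z14 z15.
Proof. intros. pose proof (B00_eq z0 z1 z2 z3 z4 z5 z6 z7 z8 z9 z10 z11 z12 z13 z14 z15) as E.
  assert (0 <= B00r z0 z1 z2 z3 z4 z5 z6 z7 z8 z9 z10 z11 z12 z13 z14 z15) by (unfold B00r; repeat apply Rplus_le_le_0_compat; (apply Rmult_le_pos; [lra | apply pow2_ge_0])).
  assert (0 <= B00n z0 z1 z2 z3 z4 z5 z6 z7 z8 z9 z10 z11 z12 z13 z14 z15) by (unfold B00n; repeat apply Rplus_le_le_0_compat; (apply Rmult_le_pos; [lra | apply pow2_ge_0])).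
  lra. Qed.

Lemma B00_zero : forall z0 z1 z2 z3 z4 z5 z6 z7 z8 z9 z10 z11 z12 z13 z14 z15, B00q z0 z1 z2 z3 z4 z5 z6 z7 z8 z9 z10 z11 z12 z13 z14 z15 = 0 -> z8 = 0.
Proof. intros z0 z1 z2 z3 z4 z5 z6 z7 z8 z9 z10 z11 z12 z13 z14 z15 Hz. pose proof (B00_eq z0 z1 z2 z3 z4 z5 z6 z7 z8 z9 z10 z11 z12 z13 z14 z15) as E.
  assert (0 <= B00r z0 z1 z2 z3 z4 z5 z6 z7 z8 z9 z10 z11 z12 z13 z14 z15) by (unfold B00r; repeat apply Rplus_le_le_0_compat; (apply Rmult_le_pos; [lra | apply pow2_ge_0])).
  unfold B00n in E.
  assert (0 <= z8 ^ 2) by apply pow2_ge_0.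
  repeat split.
  - apply (sq_zero (1163617104082117144005752183290720000000) z8); lra.
Qed.

Lemma B01_nonneg : forall z0 z1 z2 z3 z4 z5 z6 z7 z8 z9 z10, 0 <= B01q z0 z1 z2 z3 z4 z5 z6 z7 z8 z9 z10.
Proof. intros. pose proof (B01_eq z0 z1 z2 z3 z4 z5 z6 z7 z8 z9 z10) as E.
  assert (0 <= B01r z0 z1 z2 z3 z4 z5 z6 z7 z8 z9 z10) by (unfold B01r; repeat apply Rplus_le_le_0_compat; (apply Rmult_le_pos; [lra | apply pow2_ge_0])).
  assert (0 <= B01n z0 z1 z2 z3 z4 z5 z6 z7 z8 z9 z10) by (unfold B01n; repeat apply Rplus_le_le_0_compat; (apply Rmult_le_pos; [lra | apply pow2_ge_0])).
  lra. Qed.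

Lemma B01_zero : forall z0 z1 z2 z3 z4 z5 z6 z7 z8 z9 z10, B01q z0 z1 z2 z3 z4 z5 z6 z7 z8 z9 z10 = 0 -> z0 = 0 /\ z1 = 0 /\ z6 = 0.
Proof. intros z0 z1 z2 z3 z4 z5 z6 z7 z8 z9 z10 Hz. pose proof (B01_eq z0 z1 z2 z3 z4 z5 z6 z7 z8 z9 z10) as E.
  assert (0 <= B01r z0 z1 z2 z3 z4 z5 z6 z7 z8 z9 z10) by (unfold B01r; repeat apply Rplus_le_le_0_compat; (apply Rmult_le_pos; [lra | apply pow2_ge_0])).
  unfold B01n in E.
  assert (0 <= z0 ^ 2) by apply pow2_ge_0.
  assert (0 <= z1 ^ 2) by apply pow2_ge_0.
  assert (0 <= z6 ^ 2) by apply pow2_ge_0.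
  repeat split.
  - apply (sq_zero (199999050360000000000000000) z0); lra.
  - apply (sq_zero (199989880445460420000000000) z1); lra.
  - apply (sq_zero (199993728993907390978000000) z6); lra.
Qed.

Lemma B10_nonneg : forall z0 z1 z2 z3 z4 z5 z6 z7 z8 z9 z10 z11 z12 z13 z14 z15, 0 <= B10q z0 z1 z2 z3 z4 z5 z6 z7 z8 z9 z10 z11 z12 z13 z14 z15.
Proof. intros. pose proof (B10_eq z0 z1 z2 z3 z4 z5 z6 z7 z8 z9 z10 z11 z12 z13 z14 z15) as E.
  assert (0 <= B10r z0 z1 z2 z3 z4 z5 z6 z7 z8 z9 z10 z11 z12 z13 z14 z15) by (unfold B10r; repeat apply Rplus_le_le_0_compat; (apply Rmult_le_pos; [lra | apply pow2_ge_0])).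
  assert (0 <= B10n z0 z1 z2 z3 z4 z5 z6 z7 z8 z9 z10 z11 z12 z13 z14 z15) by (unfold B10n; repeat apply Rplus_le_le_0_compat; (apply Rmult_le_pos; [lra | apply pow2_ge_0])).
  lra. Qed.

Lemma B10_zero : forall z0 z1 z2 z3 z4 z5 z6 z7 z8 z9 z10 z11 z12 z13 z14 z15, B10q z0 z1 z2 z3 z4 z5 z6 z7 z8 z9 z10 z11 z12 z13 z14 z15 = 0 -> z8 = 0.
Proof. intros z0 z1 z2 z3 z4 z5 z6 z7 z8 z9 z10 z11 z12 z13 z14 z15 Hz. pose proof (B10_eq z0 z1 z2 z3 z4 z5 z6 z7 z8 z9 z10 z11 z12 z13 z14 z15) as E.
  assert (0 <= B10r z0 z1 z2 z3 z4 z5 z6 z7 z8 z9 z10 z11 z12 z13 z14 z15) by (unfold B10r; repeat apply Rplus_le_le_0_compat; (apply Rmult_le_pos; [lra | apply pow2_ge_0])).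
  unfold B10n in E.
  assert (0 <= z8 ^ 2) by apply pow2_ge_0.
  repeat split.
  - apply (sq_zero (29048857759098349638245319310030000000000) z8); lra.
Qed.

Lemma B11_nonneg : forall z0 z1 z2 z3 z4 z5 z6 z7 z8 z9 z10, 0 <= B11q z0 z1 z2 z3 z4 z5 z6 z7 z8 z9 z10.
Proof. intros. pose proof (B11_eq z0 z1 z2 z3 z4 z5 z6 z7 z8 z9 z10) as E.
  assert (0 <= B11r z0 z1 z2 z3 z4 z5 z6 z7 z8 z9 z10) by (unfold B11r; repeat apply Rplus_le_le_0_compat; (apply Rmult_le_pos; [lra | apply pow2_ge_0])).
  assert (0 <= B11n z0 z1 z2 z3 z4 z5 z6 z7 z8 z9 z10) by (unfold B11n; repeat apply Rplus_le_le_0_compat; (apply Rmult_le_pos; [lra | apply pow2_ge_0])).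
  lra. Qed.

Lemma B11_zero : forall z0 z1 z2 z3 z4 z5 z6 z7 z8 z9 z10, B11q z0 z1 z2 z3 z4 z5 z6 z7 z8 z9 z10 = 0 -> z0 = 0 /\ z1 = 0 /\ z6 = 0.
Proof. intros z0 z1 z2 z3 z4 z5 z6 z7 z8 z9 z10 Hz. pose proof (B11_eq z0 z1 z2 z3 z4 z5 z6 z7 z8 z9 z10) as E.
  assert (0 <= B11r z0 z1 z2 z3 z4 z5 z6 z7 z8 z9 z10) by (unfold B11r; repeat apply Rplus_le_le_0_compat; (apply Rmult_le_pos; [lra | apply pow2_ge_0])).
  unfold B11n in E.
  assert (0 <= z0 ^ 2) by apply pow2_ge_0.
  assert (0 <= z1 ^ 2) by apply pow2_ge_0.
  assert (0 <= z6 ^ 2) by apply pow2_ge_0.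
  repeat split.
  - apply (sq_zero (199999988160000000000000000) z0); lra.
  - apply (sq_zero (199999439093501928000000000) z1); lra.
  - apply (sq_zero (199993555946832643980000000) z6); lra.
Qed.

Lemma QA_le : forall x y w1 w2, QA x y w1 w2 <= 0.
Proof. intros. pose proof (QA_sos x y w1 w2). pose proof (B00_nonneg (w1 * (x ^ 0 * y ^ 2)) (w1 * (x ^ 1 * y ^ 1)) (w1 * (x ^ 2 * y ^ 0)) (w1 * (x ^ 0 * y ^ 4)) (w1 * (x ^ 1 * y ^ 3)) (w1 * (x ^ 2 * y ^ 2)) (w1 * (x ^ 3 * y ^ 1)) (w1 * (x ^ 4 * y ^ 0)) (w2 * (x ^ 0 * y ^ 2)) (w2 * (x ^ 1 * y ^ 1)) (w2 * (x ^ 2 * y ^ 0)) (w2 * (x ^ 0 * y ^ 4)) (w2 * (x ^ 1 * y ^ 3)) (w2 * (x ^ 2 * y ^ 2)) (w2 * (x ^ 3 * y ^ 1)) (w2 * (x ^ 4 * y ^ 0))). pose proof (B01_nonneg (w1 * (x ^ 0 * y ^ 1)) (w1 * (x ^ 1 * y ^ 0)) (w1 * (x ^ 0 * y ^ 3)) (w1 * (x ^ 1 * y ^ 2)) (w1 * (x ^ 2 * y ^ 1)) (w1 * (x ^ 3 * y ^ 0)) (w2 * (x ^ 1 * y ^ 0)) (w2 * (x ^ 0 * y ^ 3)) (w2 * (x ^ 1 * y ^ 2)) (w2 * (x ^ 2 * y ^ 1)) (w2 * (x ^ 3 * y ^ 0))). lra. Qed.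

Lemma QA_zero : forall x y w1 w2, QA x y w1 w2 = 0 ->
  w1 * (x ^ 0 * y ^ 1) = 0 /\ w1 * (x ^ 1 * y ^ 0) = 0 /\ w2 * (x ^ 1 * y ^ 0) = 0 /\ w2 * (x ^ 0 * y ^ 2) = 0.
Proof. intros x y w1 w2 Hq. pose proof (QA_sos x y w1 w2). pose proof (B00_nonneg (w1 * (x ^ 0 * y ^ 2)) (w1 * (x ^ 1 * y ^ 1)) (w1 * (x ^ 2 * y ^ 0)) (w1 * (x ^ 0 * y ^ 4)) (w1 * (x ^ 1 * y ^ 3)) (w1 * (x ^ 2 * y ^ 2)) (w1 * (x ^ 3 * y ^ 1)) (w1 * (x ^ 4 * y ^ 0)) (w2 * (x ^ 0 * y ^ 2)) (w2 * (x ^ 1 * y ^ 1)) (w2 * (x ^ 2 * y ^ 0)) (w2 * (x ^ 0 * y ^ 4)) (w2 * (x ^ 1 * y ^ 3)) (w2 * (x ^ 2 * y ^ 2)) (w2 * (x ^ 3 * y ^ 1)) (w2 * (x ^ 4 * y ^ 0))) as P0. pose proof (B01_nonneg (w1 * (x ^ 0 * y ^ 1)) (w1 * (x ^ 1 * y ^ 0)) (w1 * (x ^ 0 * y ^ 3)) (w1 * (x ^ 1 * y ^ 2)) (w1 * (x ^ 2 * y ^ 1)) (w1 * (x ^ 3 * y ^ 0)) (w2 * (x ^ 1 * y ^ 0)) (w2 * (x ^ 0 * y ^ 3)) (w2 * (x ^ 1 * y ^ 2)) (w2 * (x ^ 2 * y ^ 1)) (w2 * (x ^ 3 * y ^ 0)))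 as P1.
  assert (Z0 : B00q (w1 * (x ^ 0 * y ^ 2)) (w1 * (x ^ 1 * y ^ 1)) (w1 * (x ^ 2 * y ^ 0)) (w1 * (x ^ 0 * y ^ 4)) (w1 * (x ^ 1 * y ^ 3)) (w1 * (x ^ 2 * y ^ 2)) (w1 * (x ^ 3 * y ^ 1)) (w1 * (x ^ 4 * y ^ 0)) (w2 * (x ^ 0 * y ^ 2)) (w2 * (x ^ 1 * y ^ 1)) (w2 * (x ^ 2 * y ^ 0)) (w2 * (x ^ 0 * y ^ 4)) (w2 * (x ^ 1 * y ^ 3)) (w2 * (x ^ 2 * y ^ 2)) (w2 * (x ^ 3 * y ^ 1)) (w2 * (x ^ 4 * y ^ 0)) = 0) by lra. assert (Z1 : B01q (w1 * (x ^ 0 * y ^ 1)) (w1 * (x ^ 1 * y ^ 0)) (w1 * (x ^ 0 * y ^ 3)) (w1 * (x ^ 1 * y ^ 2)) (w1 * (x ^ 2 * y ^ 1)) (w1 * (x ^ 3 * y ^ 0)) (w2 * (x ^ 1 * y ^ 0)) (w2 * (x ^ 0 * y ^ 3)) (w2 * (x ^ 1 * y ^ 2)) (w2 * (x ^ 2 * y ^ 1)) (w2 * (x ^ 3 * y ^ 0)) = 0) by lra.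
  apply B00_zero in Z0. apply B01_zero in Z1. tauto. Qed.

Lemma QB_le : forall x y w1 w2, QB x y w1 w2 <= 0.
Proof. intros. pose proof (QB_sos x y w1 w2). pose proof (B10_nonneg (w1 * (x ^ 0 * y ^ 2)) (w1 * (x ^ 1 * y ^ 1)) (w1 * (x ^ 2 * y ^ 0)) (w1 * (x ^ 0 * y ^ 4)) (w1 * (x ^ 1 * y ^ 3)) (w1 * (x ^ 2 * y ^ 2)) (w1 * (x ^ 3 * y ^ 1)) (w1 * (x ^ 4 * y ^ 0)) (w2 * (x ^ 0 * y ^ 2)) (w2 * (x ^ 1 * y ^ 1)) (w2 * (x ^ 2 * y ^ 0)) (w2 * (x ^ 0 * y ^ 4)) (w2 * (x ^ 1 * y ^ 3)) (w2 * (x ^ 2 * y ^ 2)) (w2 * (x ^ 3 * y ^ 1)) (w2 * (x ^ 4 * y ^ 0))). pose proof (B11_nonneg (w1 * (x ^ 0 * y ^ 1)) (w1 * (x ^ 1 * y ^ 0)) (w1 * (x ^ 0 * y ^ 3)) (w1 * (x ^ 1 * y ^ 2)) (w1 * (x ^ 2 * y ^ 1)) (w1 * (x ^ 3 * y ^ 0)) (w2 * (x ^ 1 * y ^ 0)) (w2 * (x ^ 0 * y ^ 3)) (w2 * (x ^ 1 * y ^ 2)) (w2 * (x ^ 2 * y ^ 1)) (w2 * (x ^ 3 * y ^ 0))). lra. Qed.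

Lemma QB_zero : forall x y w1 w2, QB x y w1 w2 = 0 ->
  w1 * (x ^ 0 * y ^ 1) = 0 /\ w1 * (x ^ 1 * y ^ 0) = 0 /\ w2 * (x ^ 1 * y ^ 0) = 0 /\ w2 * (x ^ 0 * y ^ 2) = 0.
Proof. intros x y w1 w2 Hq. pose proof (QB_sos x y w1 w2). pose proof (B10_nonneg (w1 * (x ^ 0 * y ^ 2)) (w1 * (x ^ 1 * y ^ 1)) (w1 * (x ^ 2 * y ^ 0)) (w1 * (x ^ 0 * y ^ 4)) (w1 * (x ^ 1 * y ^ 3)) (w1 * (x ^ 2 * y ^ 2)) (w1 * (x ^ 3 * y ^ 1)) (w1 * (x ^ 4 * y ^ 0)) (w2 * (x ^ 0 * y ^ 2)) (w2 * (x ^ 1 * y ^ 1)) (w2 * (x ^ 2 * y ^ 0)) (w2 * (x ^ 0 * y ^ 4)) (w2 * (x ^ 1 * y ^ 3)) (w2 * (x ^ 2 * y ^ 2)) (w2 * (x ^ 3 * y ^ 1)) (w2 * (x ^ 4 * y ^ 0))) as P0. pose proof (B11_nonneg (w1 * (x ^ 0 * y ^ 1)) (w1 * (x ^ 1 * y ^ 0)) (w1 * (x ^ 0 * y ^ 3)) (w1 * (x ^ 1 * y ^ 2)) (w1 * (x ^ 2 * y ^ 1)) (w1 * (x ^ 3 * y ^ 0)) (w2 * (x ^ 1 * y ^ 0)) (w2 * (x ^ 0 * y ^ 3)) (w2 * (x ^ 1 * y ^ 2)) (w2 * (x ^ 2 * y ^ 1)) (w2 * (x ^ 3 * y ^ 0)))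 as P1.
  assert (Z0 : B10q (w1 * (x ^ 0 * y ^ 2)) (w1 * (x ^ 1 * y ^ 1)) (w1 * (x ^ 2 * y ^ 0)) (w1 * (x ^ 0 * y ^ 4)) (w1 * (x ^ 1 * y ^ 3)) (w1 * (x ^ 2 * y ^ 2)) (w1 * (x ^ 3 * y ^ 1)) (w1 * (x ^ 4 * y ^ 0)) (w2 * (x ^ 0 * y ^ 2)) (w2 * (x ^ 1 * y ^ 1)) (w2 * (x ^ 2 * y ^ 0)) (w2 * (x ^ 0 * y ^ 4)) (w2 * (x ^ 1 * y ^ 3)) (w2 * (x ^ 2 * y ^ 2)) (w2 * (x ^ 3 * y ^ 1)) (w2 * (x ^ 4 * y ^ 0)) = 0) by lra. assert (Z1 : B11q (w1 * (x ^ 0 * y ^ 1)) (w1 * (x ^ 1 * y ^ 0)) (w1 * (x ^ 0 * y ^ 3)) (w1 * (x ^ 1 * y ^ 2)) (w1 * (x ^ 2 * y ^ 1)) (w1 * (x ^ 3 * y ^ 0)) (w2 * (x ^ 1 * y ^ 0)) (w2 * (x ^ 0 * y ^ 3)) (w2 * (x ^ 1 * y ^ 2)) (w2 * (x ^ 2 * y ^ 1)) (w2 * (x ^ 3 * y ^ 0)) = 0) by lra.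
  apply B10_zero in Z0. apply B11_zero in Z1. tauto. Qed.

Module CQ.
Import Coquelicot.Coquelicot.
Lemma dmono (c : R) (i j : nat) (x y : R -> R) t a b :
  derivable_pt_lim x t a -> derivable_pt_lim y t b ->
  derivable_pt_lim (fun s => c * (x s ^ i * y s ^ j)) t
    (c * (INR i * x t ^ pred i * a * y t ^ j + x t ^ i * (INR j * y t ^ pred j * b))).
Proof.
  intros Hx Hy. apply is_derive_Reals. apply is_derive_Reals in Hx. apply is_derive_Reals in Hy.
  pose proof (is_derive_mult (fun s => x s ^ i) (fun s => y s ^ j) t _ _ (is_derive_pow x i t a Hx) (is_derive_pow y j t b Hy) Rmult_comm) as H.
  apply (is_derive_scal _ _ c) in H.
  match type of H with is_derive _ _ ?l => replace (c * (INR i * x t ^ pred i * a * y t ^ j + x t ^ i * (INR j * y t ^ pred j * b))) with l end.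
  exact H. unfold plus, mult; simpl. ring.
Qed.

Lemma c_plus (f g : R*R -> R) q : continuous f q -> continuous g q -> continuous (fun p => f p + g p) q.
Proof. intros; apply (continuous_plus f g q); auto. Qed.
Lemma c_mult (f g : R*R -> R) q : continuous f q -> continuous g q -> continuous (fun p => f p * g p) q.
Proof. intros; apply (continuous_mult f g q); auto. Qed.
Lemma c_const (c : R) (q : R*R) : continuous (fun _ : R*R => c) q.
Proof. apply continuous_const. Qed.
Lemma c_fst (q : R*R) : continuous (fun p : R*R => fst p) q.
Proof. destruct q; apply continuous_fst. Qed.
Lemma c_snd (q : R*R) : continuous (fun p : R*R => snd p) q.
Proof. destruct q; apply continuous_snd. Qed.
Lemma c_pow (f : R*R -> R) n q : continuous f q -> continuous (fun p => f p ^ n) q.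
Proof. intros H; induction n; simpl. apply c_const. apply c_mult; auto. Qed.
Ltac cont := match goal with
| |- continuous (fun p => @?f p + @?g p) _ => apply (c_plus f g); cont
| |- continuous (fun p => @?f p * @?g p) _ => apply (c_mult f g); cont
| |- continuous (fun p => @?f p ^ _) _ => apply (c_pow f); cont
| |- continuous (fun p => fst p) _ => apply c_fst
| |- continuous (fun p => snd p) _ => apply c_snd
| |- continuous (fun p => _) _ => apply c_const
end.
Lemma cV m q : continuous (fun p : R*R => Vf m (fst p) (snd p)) q.
Proof. unfold Vf. cont. Qed.
Lemma V_cont m px py eps : 0 < eps -> exists d, 0 < d /\ forall x y,
  Rabs (x - px) < d -> Rabs (y - py) < d -> Rabs (Vf m x y - Vf m px py) < eps.
Proof.
  intros He. pose proof (cV m (px,py)) as H.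
  apply filterlim_locally with (eps := mkposreal eps He) in H.
  destruct H as [d Hd]. exists d. split. apply cond_pos.
  intros x y H1 H2. specialize (Hd (x,y)). simpl in Hd.
  apply Hd. split; assumption.
Qed.
End CQ.

Lemma dplus (f g : R -> R) t l1 l2 : derivable_pt_lim f t l1 -> derivable_pt_lim g t l2 ->
  derivable_pt_lim (fun s => f s + g s) t (l1 + l2).
Proof. intros H1 H2. apply (derivable_pt_lim_plus f g t l1 l2 H1 H2). Qed.
Lemma dext (f : R -> R) t l1 l2 : l1 = l2 -> derivable_pt_lim f t l1 -> derivable_pt_lim f t l2.
Proof. intros ->; auto. Qed.
Ltac dsum Hx Hy := match goal with
 | |- derivable_pt_lim (fun s => _ + _) _ _ => eapply dplus; [dsum Hx Hy | dsum Hx Hy]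
 | |- _ => eapply CQ.dmono; [exact Hx | exact Hy]
end.

Lemma V_deriv m (x y : R -> R) t a b : derivable_pt_lim x t a -> derivable_pt_lim y t b ->
  derivable_pt_lim (fun s => Vf m (x s) (y s)) t (Vx m (x t) (y t) * a + Vy m (x t) (y t) * b).
Proof.
  intros Hx Hy. eapply dext. 2: { unfold Vf. dsum Hx Hy. }
  cbn [INR Nat.pred]. unfold Vx, Vy. ring.
Qed.

Definition Vd (m x y : R) : R := Vx m x y * fP m x y + Vy m x y * fQ m x y.

Lemma Vd_le m x y : 1/2 <= m <= 547/1000 -> Vd m x y <= 0.
Proof.
  intros Hm. unfold Vd, fP, fQ. rewrite Vd_Qf.
  pose proof (Qf_interp m x y (y ^ 3 - x ^ 3) (- x + m * y ^ 5)) as E.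
  pose proof (QA_le x y (y ^ 3 - x ^ 3) (- x + m * y ^ 5)) as A.
  pose proof (QB_le x y (y ^ 3 - x ^ 3) (- x + m * y ^ 5)) as B.
  set (q := Qf m x y (y ^ 3 - x ^ 3) (- x + m * y ^ 5)) in *.
  set (a := QA x y (y ^ 3 - x ^ 3) (- x + m * y ^ 5)) in *.
  set (b := QB x y (y ^ 3 - x ^ 3) (- x + m * y ^ 5)) in *.
  clearbody q a b.
  assert (0 <= (547 - 1000 * m) * (- a)) by (apply Rmult_le_pos; lra).
  assert (0 <= (1000 * m - 500) * (- b)) by (apply Rmult_le_pos; lra).
  nra.
Qed.

Lemma Vd_zero m x y : 1/2 <= m <= 547/1000 -> Vd m x y = 0 -> fP m x y = 0 /\ fQ m x y = 0.
Proof.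
  intros Hm H0. unfold Vd, fP, fQ in *. rewrite Vd_Qf in H0.
  pose proof (Qf_interp m x y (y ^ 3 - x ^ 3) (- x + m * y ^ 5)) as E.
  pose proof (QA_le x y (y ^ 3 - x ^ 3) (- x + m * y ^ 5)) as A.
  pose proof (QB_le x y (y ^ 3 - x ^ 3) (- x + m * y ^ 5)) as B.
  assert (Hz : (y ^ 3 - x ^ 3) * (x ^ 0 * y ^ 1) = 0 /\ (y ^ 3 - x ^ 3) * (x ^ 1 * y ^ 0) = 0 /\
    (- x + m * y ^ 5) * (x ^ 1 * y ^ 0) = 0 /\ (- x + m * y ^ 5) * (x ^ 0 * y ^ 2) = 0).
  { set (q := Qf m x y (y ^ 3 - x ^ 3) (- x + m * y ^ 5)) in *.
    destruct (Rle_lt_dec m (547/1000 - 1/100000)) as [Hlt|Hge].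
    - apply QA_zero.
      set (a := QA x y (y ^ 3 - x ^ 3) (- x + m * y ^ 5)) in *.
      set (b := QB x y (y ^ 3 - x ^ 3) (- x + m * y ^ 5)) in *.
      clearbody q a b.
      assert (0 <= (547 - 1000 * m) * (- a)) by (apply Rmult_le_pos; lra).
      assert (0 <= (1000 * m - 500) * (- b)) by (apply Rmult_le_pos; lra).
      assert (Ha : (547 - 1000 * m) * (- a) = 0) by nra.
      destruct (Rmult_integral _ _ Ha); lra.
    - apply QB_zero.
      set (a := QA x y (y ^ 3 - x ^ 3) (- x + m * y ^ 5)) in *.
      set (b := QB x y (y ^ 3 - x ^ 3) (- x + m * y ^ 5)) in *.
      clearbody q a b.
      assert (0 <= (547 - 1000 * m) * (- a)) by (apply Rmult_le_pos; lra).
      assert (0 <= (1000 * m - 500) * (- b)) by (apply Rmult_le_pos; lra).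
      assert (Hb : (1000 * m - 500) * (- b) = 0) by nra.
      destruct (Rmult_integral _ _ Hb); lra. }
  rewrite !pow_O, !pow_1, !Rmult_1_l, !Rmult_1_r in Hz.
  destruct Hz as [H1 [H2 [H3 H4]]].
  set (u := y ^ 3 - x ^ 3) in *. set (v := - x + m * y ^ 5) in *.
  destruct (Req_dec x 0) as [Hx|Hx].
  - destruct (Req_dec y 0) as [Hy|Hy].
    + unfold u, v. rewrite Hx, Hy. split; ring.
    + split.
      * destruct (Rmult_integral _ _ H1); [assumption| contradiction].
      * destruct (Rmult_integral _ _ H4) as [h|h]; [assumption|].
        exfalso. apply Hy. apply pow2_zero. exact h.
  - split.
    + destruct (Rmult_integral _ _ H2); [assumption| contradiction].
    + destruct (Rmult_integral _ _ H3); [assumption| contradiction].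
Qed.

Lemma mono (h d : R -> R) : (forall t, derivable_pt_lim h t (d t)) -> (forall t, d t <= 0) ->
  forall a b, a <= b -> h b <= h a.
Proof.
  intros Hd Hn a b Hab. destruct (Req_dec a b) as [->|Hne]. lra.
  destruct (MVT_cor2 h d a b) as [c [Hc _]]. lra. intros; apply Hd.
  specialize (Hn c). nra.
Qed.

Lemma strict_dec (h : R -> R) t l B : derivable_pt_lim h t l -> l < 0 -> 0 < B ->
  exists s, 0 < s <= B /\ h (t + s) < h t.
Proof.
  intros Hd Hl HB. destruct (Hd (- l / 2)) as [del Hdel]. lra.
  set (s := Rmin del B / 2).
  pose proof (cond_pos del) as Hdp.
  assert (Hmin : 0 < Rmin del B /\ Rmin del B <= del /\ Rmin del B <= B).
  { unfold Rmin; destruct (Rle_dec del B); lra. }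
  assert (Hs0 : 0 < s) by (unfold s; lra).
  assert (Hs1 : s < del) by (unfold s; lra).
  assert (Hs2 : s <= B) by (unfold s; lra).
  exists s. split. lra.
  specialize (Hdel s). assert (s <> 0) by lra. assert (Rabs s < del) by (rewrite Rabs_right; lra).
  specialize (Hdel H H0). apply Rabs_def2 in Hdel. destruct Hdel as [Hu _].
  set (q := (h (t + s) - h t) / s) in *.
  assert (Eq : h (t + s) - h t = q * s) by (unfold q; field; lra).
  nra.
Qed.

Lemma pdist_bound a b c d e : pdist (a, b) (c, d) < e -> Rabs (a - c) < e /\ Rabs (b - d) < e.
Proof.
  unfold pdist; simpl. intros H. split.
  - rewrite <- sqrt_Rsqr_abs. eapply Rle_lt_trans; [|exact H].
    apply sqrt_le_1_alt. unfold Rsqr. pose proof (pow2_ge_0 (b - d)).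
    replace ((a - c) * (a - c)) with ((a - c) ^ 2) by ring. lra.
  - rewrite <- sqrt_Rsqr_abs. eapply Rle_lt_trans; [|exact H].
    apply sqrt_le_1_alt. unfold Rsqr. pose proof (pow2_ge_0 (a - c)).
    replace ((b - d) * (b - d)) with ((b - d) ^ 2) by ring. lra.
Qed.

Section Traj.
Variable m : R.
Hypothesis Hm : 1/2 <= m <= 547/1000.

Lemma traj_deriv (x y : R -> R) : is_solution (fP m) (fQ m) (fun _ => True) x y ->
  forall t, derivable_pt_lim (fun s => Vf m (x s) (y s)) t (Vd m (x t) (y t)).
Proof.
  intros Hs t. destruct (Hs t I) as [H1 H2]. unfold Vd. apply V_deriv; assumption.
Qed.

Lemma traj_mono (x y : R -> R) : is_solution (fP m) (fQ m) (fun _ => True) x y ->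
  forall a b, a <= b -> Vf m (x b) (y b) <= Vf m (x a) (y a).
Proof.
  intros Hs. apply (mono (fun s => Vf m (x s) (y s)) (fun s => Vd m (x s) (y s))).
  apply traj_deriv; auto. intros; apply Vd_le; auto.
Qed.

Lemma traj_strict (x y : R -> R) B : is_solution (fP m) (fQ m) (fun _ => True) x y ->
  ~ is_equilibrium (fP m) (fQ m) (x 0, y 0) -> 0 < B ->
  exists s, 0 < s <= B /\ Vf m (x s) (y s) < Vf m (x 0) (y 0).
Proof.
  intros Hs Hne HB.
  assert (Hl : Vd m (x 0) (y 0) < 0).
  { destruct (Rle_lt_or_eq_dec _ _ (Vd_le m (x 0) (y 0) Hm)) as [h|h]; auto.
    exfalso. apply Hne. unfold is_equilibrium; simpl. apply Vd_zero; auto. }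
  destruct (strict_dec _ 0 _ B (traj_deriv x y Hs 0) Hl HB) as [s [Hs1 Hs2]].
  exists s. split; auto. rewrite Rplus_0_l in Hs2. exact Hs2.
Qed.
End Traj.

Theorem proposition6p2 :
  forall m : R, 1 / 2 <= m <= 547 / 1000 ->
    (~ exists G, limit_cycle (fP m) (fQ m) G) /\
    (~ exists C, polycycle (fP m) (fQ m) C).
Proof.
  intros m Hm. split.
  - intros [G [[x [y [T [Hs [HT [Hper [Hne _]]]]]]] _]].
    destruct (traj_strict m Hm x y T Hs Hne HT) as [s [[Hs0 HsT] Hlt]].
    pose proof (traj_mono m Hm x y Hs s T HsT) as Hmo.
    destruct (Hper 0) as [Px Py]. rewrite Rplus_0_l in Px, Py.
    rewrite Px, Py in Hmo. lra.
  - intros [C [n [pts [gx [gy [Hn [_ [_ [Horb _]]]]]]]]].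
    set (W := fun k => Vf m (fst (pts k)) (snd (pts k))).
    assert (Up : forall i, (i < n)%nat -> forall t, Vf m (gx i t) (gy i t) <= W i).
    { intros i Hi t0. destruct (Horb i Hi) as [Hs [_ [Hlim _]]].
      destruct (Rle_lt_dec (Vf m (gx i t0) (gy i t0)) (W i)) as [h|h]; auto. exfalso.
      destruct (CQ.V_cont m (fst (pts i)) (snd (pts i)) (Vf m (gx i t0) (gy i t0) - W i)) as [d [Hd Hc]]. lra.
      destruct (Hlim d Hd) as [M HM].
      set (t1 := Rmin M t0 - 1).
      assert (t1 < M) by (unfold t1; pose proof (Rmin_l M t0); lra).
      assert (t1 <= t0) by (unfold t1; pose proof (Rmin_r M t0); lra).
      specialize (HM t1 H). destruct (pts i) as [p1 p2] eqn:Ep.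
      apply pdist_bound in HM. destruct HM as [B1 B2].
      specialize (Hc _ _ B1 B2). unfold W in *. rewrite Ep in *. simpl in *.
      pose proof (traj_mono m Hm _ _ Hs t1 t0 H0). apply Rabs_def2 in Hc. lra. }
    assert (Lo : forall i, (i < n)%nat -> forall t, W ((i + 1) mod n)%nat <= Vf m (gx i t) (gy i t)).
    { intros i Hi t0. destruct (Horb i Hi) as [Hs [_ [_ Hlim]]].
      destruct (Rle_lt_dec (W ((i + 1) mod n)%nat) (Vf m (gx i t0) (gy i t0))) as [h|h]; auto. exfalso.
      destruct (CQ.V_cont m (fst (pts ((i + 1) mod n)%nat)) (snd (pts ((i + 1) mod n)%nat)) (W ((i + 1) mod n)%nat - Vf m (gx i t0) (gy i t0))) as [d [Hd Hc]]. lra.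
      destruct (Hlim d Hd) as [M HM].
      set (t1 := Rmax M t0 + 1).
      assert (M < t1) by (unfold t1; pose proof (Rmax_l M t0); lra).
      assert (t0 <= t1) by (unfold t1; pose proof (Rmax_r M t0); lra).
      specialize (HM t1 H). destruct (pts ((i + 1) mod n)%nat) as [p1 p2] eqn:Ep.
      apply pdist_bound in HM. destruct HM as [B1 B2].
      specialize (Hc _ _ B1 B2). unfold W in *. rewrite Ep in *. simpl in *.
      pose proof (traj_mono m Hm _ _ Hs t0 t1 H0). apply Rabs_def2 in Hc. lra. }
    assert (Step : forall i, (i < n)%nat -> W ((i + 1) mod n)%nat <= W i).
    { intros i Hi. pose proof (Lo i Hi 0). pose proof (Up i Hi 0). lra. }
    assert (Strict : W (1 mod n)%nat < W 0%nat).
    { destruct (Horb 0%nat Hn) as [Hs [Hne _]].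
      destruct (traj_strict m Hm (gx 0%nat) (gy 0%nat) 1 Hs Hne) as [s [_ Hlt]]. lra.
      pose proof (Lo 0%nat Hn s). pose proof (Up 0%nat Hn 0). simpl in *. lra. }
    assert (Chain : forall j, (1 <= j <= n)%nat -> W (j mod n)%nat <= W (1 mod n)%nat).
    { induction j as [|j IH]; intros Hj. lia.
      destruct (Nat.eq_dec j 0) as [->|Hj0]. lra.
      assert (Hjn : (j < n)%nat) by lia.
      pose proof (Step j Hjn) as S1.
      replace (S j) with (j + 1)%nat by lia.
      assert (W (j mod n)%nat <= W (1 mod n)%nat) by (apply IH; lia).
      rewrite (Nat.mod_small j n Hjn) in H. lra. }
    specialize (Chain n ltac:(lia)). rewrite Nat.Div0.mod_same in Chain. lra.
Qed.
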